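(* Let $G$ be a group with a conjugation-closed generating set $X$ and let $g\in\mathrm{Mon}(X)$. The order complex $O_g$ of the interval $[1,g]$, with the orthoscheme metric, is isometric to the space $\mathrm{WFact}(G,g,\mathbf I)$ of weighted linear factorizations of $g$.
   Context: $\mathrm{Mon}(X)$ is the generated submonoid; $\ell(x)$ is the minimal length of a product of elements of $X$ equal to $x$; $x\le y$ if there is $x'\in\mathrm{Mon}(X)$ with $xx'=y$ and $\ell(x)+\ell(x')=\ell(y)$; $[1,g]=\{x:x\le g\}$, a bounded graded poset of height $n=\ell(g)$. $O_g$ is the order complex of $[1,g]$ (an ordered $k$-simplex for each chain $x_0<\cdots<x_k$), with the orthoscheme metric: each maximal simplex (maximal chain $x_0<\cdots<x_n$) is the standard orthoscheme $\{0\le y_1\le\cdots\le y_n\le1\}\subset\mathbb R^n$ with $x_i$ at the vertex whose last $i$ coordinates are $1$ and the others $0$. A linear factorization of $g$ is $[x_L\ x_1\cdots x_k\ x_R]$ with entries in $\mathrm{Mon}(X)$, $x_1,\dots,x_k\ne1$, lengths summing to $\ell(g)$, product $g$. A weighted linear factorization of $g$ is a function $\mathbf u\colon[0,1]\to G$, trivial at all but finitely many points, such that with $0<s_1<\dots<s_k<1$ the points of $(0,1)$ where $\mathbf u$ is nontrivial, $P(\mathbf u)=[\mathbf u(0)\ \mathbf u(s_1)\cdots\mathbf u(s_k)\ \mathbf u(1)]$ is a linear factorization of $g$. $\mathrm{WFact}(G,g,\mathbf I)$ is the set of these with the following metric. For $G=\mathbb Z$, $X=\{1\}$, a weighted linear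 factorization $\mathbf s$ of $n$ (values are nonnegative integers summing to $n$) is identified with the point of the standard orthoscheme $\{0\le y_1\le\cdots\le y_n\le1\}$ obtained by listing, in nondecreasing order, each $r\in[0,1]$ repeated $\mathbf s(r)$ times. For general $G$, the map $L(\mathbf u)=\ell\circ\mathbf u$ sends each cell $\{\mathbf u:P(\mathbf u)=\mathbf x\}$ bijectively onto the open face $\{\mathbf s:P(\mathbf s)=L(\mathbf x)\}$ of this orthoscheme (where $L([x_L\cdots x_R])=[\ell(x_L)\cdots\ell(x_R)]$); pulling back the Euclidean metric on each cell and taking closures makes $\mathrm{WFact}(G,g,\mathbf I)$ a piecewise-Euclidean complex, with the induced length metric. *)

(* Defs.v *)
From Coquelicot Require Import Coquelicot.
From Stdlib Require Import Reals List Arith ClassicalEpsilon ClassicalDescription Sorting.Sorted.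
Import ListNotations.
Set Implicit Arguments.
Open Scope R_scope.

Record Group := MkGroup {
  gcar :> Type;
  gmul : gcar -> gcar -> gcar;
  gone : gcar;
  ginv : gcar -> gcar;
  gmulA : forall a b c, gmul a (gmul b c) = gmul (gmul a b) c;
  gmul1l : forall a, gmul gone a = a;
  gmul1r : forall a, gmul a gone = a;
  gmulVl : forall a, gmul (ginv a) a = gone;
  gmulVr : forall a, gmul a (ginv a) = gone }.

Section GroupDefs.
Variable G : Group.
Variable X : G -> Prop.

Definition gprod (l : list G) : G := fold_right (gmul G) (gone G) l.

Definition generates : Prop :=
  forall h : G, exists l : list (bool * G)%type,
    Forall (fun bx : (bool * G)%type => X (snd bx)) l /\
    h = gprod (map (fun bx : (bool * G)%type => if fst bx then snd bx else ginv G (snd bx)) l).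

Definition conj_closed : Prop :=
  forall x h : G, X x -> X (gmul G (gmul G h x) (ginv G h)).

Definition InMon (x : G) : Prop := exists l, Forall X l /\ gprod l = x.

Definition len_is_prod (x : G) (m : nat) : Prop :=
  exists l, Forall X l /\ length l = m /\ gprod l = x.

Definition is_min_len (x : G) (n : nat) : Prop :=
  len_is_prod x n /\ forall m, len_is_prod x m -> (n <= m)%nat.

(* ell(x): minimal length of a product of elements of X equal to x
   (meaningful for x in Mon(X); an unspecified value otherwise) *)
Definition ell (x : G) : nat := epsilon (inhabits 0%nat) (is_min_len x).

Definition gle (x y : G) : Prop :=
  InMon x /\ exists x', InMon x' /\ gmul G x x' = y /\ (ell x + ell x' = ell y)%nat.

Definition glt (x y : G) : Prop := gle x y /\ x <> y.

Variable g : G.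

Definition is_chain (c : list G) : Prop :=
  (forall i j, (i < j < length c)%nat -> glt (nth i c (gone G)) (nth j c (gone G))) /\
  Forall (fun x => gle x g) c.

Definition max_chain (c : list G) : Prop :=
  is_chain c /\ forall c', is_chain c' -> incl c c' -> incl c' c.

(* linear factorization [x_L x_1 ... x_k x_R] of g *)
Definition lin_fact (x : list G) : Prop :=
  (2 <= length x)%nat /\
  Forall InMon x /\
  (forall i, (1 <= i <= length x - 2)%nat -> nth i x (gone G) <> gone G) /\
  fold_right Nat.add 0%nat (map ell x) = ell g /\
  gprod x = g.

End GroupDefs.
Arguments gprod {G} l.
Arguments generates {G} X.
Arguments conj_closed {G} X.
Arguments InMon {G} X x.
Arguments len_is_prod {G} X x m.
Arguments is_min_len {G} X x n.
Arguments ell {G} X x.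
Arguments gle {G} X x y.
Arguments glt {G} X x y.
Arguments is_chain {G} X g c.
Arguments max_chain {G} X g c.
Arguments lin_fact {G} X g x.

(* Vectors of R^m are functions nat -> R, using coordinates 1..m.      *)
Fixpoint rsum (f : nat -> R) (m : nat) : R :=
  match m with O => 0 | S m' => rsum f m' + f m end.

Definition eucl (m : nat) (a b : nat -> R) : R :=
  sqrt (rsum (fun j => (a j - b j) ^ 2) m).

Definition orthoscheme (m : nat) (y : nat -> R) : Prop :=
  (forall j, (1 <= j <= m)%nat -> 0 <= y j <= 1) /\
  (forall j, (1 <= j < m)%nat -> y j <= y (S j)).

(* A closed cell c is the image of  chart c : dom c -> P ; its metric is
   the Euclidean metric of R^(amb c) pulled back along emb c.           *)
Record pecomplex (P : Type) := PEC {
  pts : P -> Prop;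
  cell : Type;
  is_cell : cell -> Prop;
  amb : cell -> nat;
  dom : cell -> (nat -> R) -> Prop;
  chart : cell -> (nat -> R) -> P;
  emb : cell -> (nat -> R) -> (nat -> R) }.

Definition cell_step P (K : pecomplex P) (p q : P) (d : R) : Prop :=
  exists c a b, is_cell K c /\ dom K c a /\ dom K c b /\
    chart K c a = p /\ chart K c b = q /\
    d = eucl (amb K c) (emb K c a) (emb K c b).

Inductive string_len P (K : pecomplex P) : P -> P -> R -> Prop :=
| sl_nil : forall p, pts K p -> string_len K p p 0
| sl_cons : forall p q r d e, pts K p -> cell_step K p q d ->
    string_len K q r e -> string_len K p r (d + e).

Definition pe_dist P (K : pecomplex P) (p q : P) : Rbar :=
  Glb_Rbar (string_len K p q).

Definition isometric P Q (K : pecomplex P) (L : pecomplex Q) : Prop :=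
  exists f : P -> Q,
    (forall p, pts K p -> pts L (f p)) /\
    (forall p p', pts K p -> pts K p' -> f p = f p' -> p = p') /\
    (forall q, pts L q -> exists p, pts K p /\ f p = q) /\
    (forall p p', pts K p -> pts K p' -> pe_dist L (f p) (f p') = pe_dist K p p').

(* Points: barycentric coordinates, i.e. functions [1,g] -> [0,1]
   (represented as G -> R) supported on a chain.                        *)
Section OrderComplex.
Variables (G : Group) (X : G -> Prop) (g : G).

(* maximal simplex of the chain c = x_0 < ... < x_k (k = length c - 1),
   identified with the standard orthoscheme in R^k, with x_i at the
   vertex whose last i coordinates are 1: the barycentric weight of x_i
   at y is  Y(k-i+1) - Y(k-i)  with Y 0 = 0, Y (k+1) = 1, Y j = y j.    *)
Definition oc_chart (c : list G) (y : nat -> R) : G -> R :=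
  let k := (length c - 1)%nat in
  let Y j := if Nat.eqb j 0 then 0 else if Nat.eqb j (S k) then 1 else y j in
  fun z => fold_right Rplus 0
    (map (fun i => if excluded_middle_informative (z = nth i c (gone G))
                   then Y (S k - i)%nat - Y (k - i)%nat else 0)
         (seq 0 (length c))).

Definition Og_complex : pecomplex (G -> R) := {|
  pts := fun p => exists c y, max_chain X g c /\
            orthoscheme (length c - 1) y /\ oc_chart c y = p;
  cell := list G;
  is_cell := max_chain X g;
  amb := fun c => (length c - 1)%nat;
  dom := fun c => orthoscheme (length c - 1);
  chart := oc_chart;
  emb := fun _ y => y |}.
End OrderComplex.
Arguments oc_chart {G} c y.
Arguments Og_complex {G} X g.

(* A function u : [0,1] -> G is represented by u : R -> G with u r = 1
   outside [0,1].                                                       *)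
Section WFact.
Variables (G : Group) (X : G -> Prop) (g : G).

Definition is_wfact (u : R -> G) : Prop :=
  (forall r, ~ (0 <= r <= 1) -> u r = gone G) /\
  exists s : list R,
    StronglySorted Rlt s /\ Forall (fun r => 0 < r < 1) s /\
    (forall r, 0 < r < 1 -> (u r <> gone G <-> In r s)) /\
    lin_fact X g (u 0 :: map u s ++ [u 1]).

Definition wpos (x : list G) (s : nat -> R) (i : nat) : R :=
  if Nat.eqb i 0 then 0 else if Nat.eqb i (length x - 1) then 1 else s i.

Definition wf_chart (x : list G) (s : nat -> R) : R -> G :=
  fun r => fold_right
    (fun i acc => if Req_EM_T (wpos x s i) r then gmul G (nth i x (gone G)) acc else acc)
    (gone G) (seq 0 (length x)).

(* the corresponding point of the standard orthoscheme in R^n (n = ell g):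
   each position repeated ell(entry) times, in nondecreasing order *)
Definition wf_emb (x : list G) (s : nat -> R) : nat -> R :=
  let l := flat_map (fun i => repeat (wpos x s i) (ell X (nth i x (gone G))))
                    (seq 0 (length x)) in
  fun j => nth (j - 1) l 0.

Definition WFact_complex : pecomplex (R -> G) := {|
  pts := is_wfact;
  cell := list G;
  is_cell := lin_fact X g;
  amb := fun _ => ell X g;
  dom := fun x => orthoscheme (length x - 2);
  chart := wf_chart;
  emb := wf_emb |}.
End WFact.
Arguments is_wfact {G} X g u.
Arguments wpos {G} x s i.
Arguments wf_chart {G} x s.
Arguments wf_emb {G} X x s.
Arguments WFact_complex {G} X g.

(* Main.v *)
Require Import Defs.
From Coquelicot Require Import Coquelicot.
From Stdlib Require Import Bool Reals Lra List Arith Lia ClassicalEpsilon ClassicalDescription Sorting.Sorted FunctionalExtensionality PropExtensionality.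
Import ListNotations.
Set Implicit Arguments.
Set Bullet Behavior "Strict Subproofs".

Section Grp.
Variable G : Group.
Local Notation "x ** y" := (gmul G x y) (at level 40, left associativity).
Local Notation "1g" := (gone G).
Local Notation inv := (ginv G).

Lemma g_inv_inv (a : G) : inv (inv a) = a.
Proof.
  rewrite <- (gmul1r G (inv (inv a))), <- (gmulVl G a), gmulA, gmulVl, gmul1l; auto.
Qed.

Lemma g_cancel_l (a b c : G) : a ** b = a ** c -> b = c.
Proof.
  intro H. rewrite <- (gmul1l G b), <- (gmul1l G c), <- (gmulVl G a), <- !gmulA, H; auto.
Qed.

Lemma g_cancel_r (a b c : G) : b ** a = c ** a -> b = c.
Proof.
  intro H. rewrite <- (gmul1r G b), <- (gmul1r G c), <- (gmulVr G a), !gmulA, H; auto.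
Qed.

Lemma gprod_app (l1 l2 : list G) : gprod (l1 ++ l2) = gprod l1 ** gprod l2.
Proof.
  induction l1; simpl. rewrite gmul1l; auto. rewrite IHl1, gmulA; auto.
Qed.

Lemma g_solve_r (a b c : G) : a ** b = c -> a = c ** inv b.
Proof. intro H; subst. rewrite <- gmulA, gmulVr, gmul1r; auto. Qed.

Lemma g_solve_l (a b c : G) : a ** b = c -> b = inv a ** c.
Proof. intro H; subst. rewrite gmulA, gmulVl, gmul1l; auto. Qed.

End Grp.

Section Ell.
Variable G : Group.
Variable X : G -> Prop.
Local Notation "x ** y" := (gmul G x y) (at level 40, left associativity).
Local Notation "1g" := (gone G).
Local Notation inv := (ginv G).
Local Notation ell := (ell X).

Lemma ell_spec (x : G) : InMon X x -> is_min_len X x (ell x).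
Proof.
  intros [l [Hl Hp]].
  unfold Defs.ell. apply epsilon_spec.
  assert (Hex : exists m, len_is_prod X x m) by (exists (length l); exists l; auto).
  destruct (dec_inh_nat_subset_has_unique_least_element (len_is_prod X x)) as [n [[Hn Hmin] _]].
  - intro m; apply classic.
  - exact Hex.
  - exists n; split; auto.
Qed.

Lemma InMon_gprod (l : list G) : Forall X l -> InMon X (gprod l).
Proof. intro H; exists l; auto. Qed.

Lemma ell_le (l : list G) : Forall X l -> (ell (gprod l) <= length l)%nat.
Proof.
  intro H. destruct (ell_spec (InMon_gprod H)) as [_ Hm]. apply Hm. exists l; auto.
Qed.

Lemma fac (x : G) : InMon X x -> exists l, Forall X l /\ length l = ell x /\ gprod l = x.
Proof. intro H. destruct (ell_spec H) as [[l Hl] _]. exists l; tauto. Qed.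

Lemma InMon_one : InMon X 1g.
Proof. exists []; simpl; auto. Qed.

Lemma ell_one : ell 1g = 0%nat.
Proof.
  pose proof (ell_le (l := []) (Forall_nil _)). simpl in H. lia.
Qed.

Lemma ell0_one (x : G) : InMon X x -> ell x = 0%nat -> x = 1g.
Proof.
  intros H H0. destruct (fac H) as [l [_ [Hl Hp]]]. rewrite H0 in Hl.
  destruct l; [ subst; auto | discriminate ].
Qed.

Lemma InMon_mul (x y : G) : InMon X x -> InMon X y -> InMon X (x ** y).
Proof.
  intros [l1 [H1 <-]] [l2 [H2 <-]]. exists (l1 ++ l2); split.
  apply Forall_app; auto. apply gprod_app.
Qed.

Lemma ell_mul (x y : G) : InMon X x -> InMon X y -> (ell (x ** y) <= ell x + ell y)%nat.
Proof.
  intros Hx Hy. destruct (fac Hx) as [l1 [A1 [B1 C1]]]. destruct (fac Hy) as [l2 [A2 [B2 C2]]].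
  subst x y. rewrite <- gprod_app. rewrite <- B1, <- B2, <- length_app.
  apply ell_le. apply Forall_app; auto.
Qed.

Definition geo (l : list G) := Forall X l /\ ell (gprod l) = length l.

Lemma geo_app (l1 l2 : list G) : geo (l1 ++ l2) -> geo l1 /\ geo l2.
Proof.
  intros [HF He]. apply Forall_app in HF as [F1 F2].
  pose proof (ell_le F1). pose proof (ell_le F2).
  pose proof (ell_mul (InMon_gprod F1) (InMon_gprod F2)).
  rewrite <- gprod_app, He, length_app in H1.
  split; split; auto; lia.
Qed.

Lemma geo_X (t : G) : X t -> t <> 1g -> ell t = 1%nat.
Proof.
  intros Ht Hn. pose proof (ell_le (l := [t]) (Forall_cons _ Ht (Forall_nil _))).
  simpl in H. rewrite gmul1r in H.
  assert (HM : InMon X t) by (exists [t]; simpl; rewrite gmul1r; auto).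
  destruct (ell t) eqn:E. exfalso; apply Hn, ell0_one; auto. lia.
Qed.

Lemma ell1_X (t : G) : InMon X t -> ell t = 1%nat -> X t.
Proof.
  intros H H1. destruct (fac H) as [l [A [B C]]]. rewrite H1 in B.
  destruct l as [|a [|]]; try discriminate. simpl in C. rewrite gmul1r in C. subst.
  inversion A; auto.
Qed.

Definition conjg (h x : G) := h ** x ** inv h.

Lemma conjg_mul (h x y : G) : conjg h (x ** y) = conjg h x ** conjg h y.
Proof.
  unfold conjg. rewrite !gmulA. f_equal. rewrite <- (gmulA G (h ** x) (inv h) h), gmulVl, gmul1r; auto.
Qed.

Lemma conjg_gprod (h : G) (l : list G) : gprod (map (conjg h) l) = conjg h (gprod l).
Proof.
  induction l; simpl. unfold conjg. rewrite gmul1r, gmulVr; auto.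
  rewrite IHl, conjg_mul; auto.
Qed.

Hypothesis Hcc : conj_closed X.

Lemma conjg_X (h t : G) : X t -> X (conjg h t).
Proof. intro; apply Hcc; auto. Qed.

Lemma ell_conj_le (h x : G) : InMon X x -> (ell (conjg h x) <= ell x)%nat.
Proof.
  intro H. destruct (fac H) as [l [A [B C]]]. subst x.
  rewrite <- conjg_gprod, <- B. rewrite <- (length_map (conjg h)). apply ell_le.
  apply Forall_map. eapply Forall_impl; [|exact A]. intros; apply conjg_X; auto.
Qed.

Lemma InMon_conj (h x : G) : InMon X x -> InMon X (conjg h x).
Proof.
  intros [l [A <-]]. rewrite <- conjg_gprod. apply InMon_gprod.
  apply Forall_map. eapply Forall_impl; [|exact A]. intros; apply conjg_X; auto.
Qed.

Lemma conjg_inv (h x : G) : conjg (inv h) (conjg h x) = x.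
Proof.
  unfold conjg. rewrite g_inv_inv, !gmulA, gmulVl, gmul1l, <- gmulA, gmulVl, gmul1r; auto.
Qed.

Lemma ell_conj (h x : G) : InMon X x -> ell (conjg h x) = ell x.
Proof.
  intro H. apply Nat.le_antisymm. apply ell_conj_le; auto.
  rewrite <- (conjg_inv h x) at 1. apply ell_conj_le. apply InMon_conj; auto.
Qed.

End Ell.
Arguments geo {G} X l.
Arguments conjg {G} h x.

Section Chains.
Variable G : Group.
Variable X : G -> Prop.
Local Notation "x ** y" := (gmul G x y) (at level 40, left associativity).
Local Notation "1g" := (gone G).
Local Notation inv := (ginv G).
Local Notation ell := (ell X).
Hypothesis Hcc : conj_closed X.

Definition sfx (e : list G) (i : nat) : G := gprod (skipn (length e - i) e).
Definition chainE (e : list G) : list G := map (sfx e) (seq 0 (S (length e))).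

Lemma geo_sfx (e : list G) i : geo X e -> geo X (skipn i e).
Proof. intro H. rewrite <- (firstn_skipn i e) in H. apply geo_app in H; tauto. Qed.

Lemma geo_pfx (e : list G) i : geo X e -> geo X (firstn i e).
Proof. intro H. rewrite <- (firstn_skipn i e) in H. apply geo_app in H; tauto. Qed.

Lemma ell_sfx (e : list G) i : geo X e -> (i <= length e)%nat -> ell (sfx e i) = i.
Proof.
  intros H Hi. destruct (geo_sfx (length e - i) H) as [_ E]. unfold sfx. rewrite E, length_skipn. lia.
Qed.

Lemma InMon_sfx (e : list G) i : Forall X e -> InMon X (sfx e i).
Proof. intro H. apply InMon_gprod. rewrite <- (firstn_skipn (length e - i) e) in H. apply Forall_app in H; tauto. Qed.

Lemma glt_ell (x y : G) : glt X x y -> (ell x < ell y)%nat.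
Proof.
  intros [[Hx [x' [Hx' [E L]]]] N].
  destruct (ell x') eqn:Ex. exfalso. apply N. rewrite <- E, (ell0_one Hx' Ex), gmul1r; auto. lia.
Qed.

Lemma gle_ell (x y : G) : gle X x y -> (ell x <= ell y)%nat.
Proof. intros [_ [x' [_ [_ L]]]]. lia. Qed.

Lemma gle_sfx (e : list G) i j : geo X e -> (i <= j <= length e)%nat -> gle X (sfx e i) (sfx e j).
Proof.
  intros H Hij. destruct H as [HF HE].
  assert (Hs : skipn (length e - j) e = firstn (j - i) (skipn (length e - j) e) ++ skipn (length e - i) e).
  { rewrite <- (firstn_skipn (j - i) (skipn (length e - j) e)) at 1. f_equal.
    rewrite skipn_skipn. f_equal. lia. }
  set (P := gprod (firstn (j - i) (skipn (length e - j) e))).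
  assert (HgeoP : geo X (firstn (j - i) (skipn (length e - j) e))).
  { apply geo_pfx, geo_sfx. split; auto. }
  split. apply InMon_sfx; auto.
  exists (conjg (inv (sfx e i)) P). split; [|split].
  - apply InMon_conj; auto. apply InMon_gprod. apply HgeoP.
  - assert (Ej : sfx e j = P ** sfx e i) by (unfold sfx at 1; rewrite Hs, gprod_app; auto).
    rewrite Ej. unfold conjg. rewrite g_inv_inv. rewrite !gmulA, gmulVr, gmul1l. auto.
  - rewrite (ell_conj Hcc). 2: apply InMon_gprod, HgeoP.
    rewrite !ell_sfx; try (split; auto); try lia. unfold P. destruct HgeoP as [_ ->].
    rewrite length_firstn, length_skipn. lia.
Qed.

Definition atomic (g : G) (e : list G) := Forall X e /\ gprod e = g /\ length e = ell g.

Lemma atomic_geo g e : atomic g e -> geo X e.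
Proof. intros [A [B C]]. split; auto. rewrite B; auto. Qed.

Lemma length_chainE e : length (chainE e) = S (length e).
Proof. unfold chainE. rewrite length_map, length_seq; auto. Qed.

Lemma nth_chainE e i d : (i <= length e)%nat -> nth i (chainE e) d = sfx e i.
Proof.
  intro H. unfold chainE. rewrite nth_indep with (d' := sfx e 0). rewrite map_nth, seq_nth; auto. lia.
  rewrite length_map, length_seq. lia.
Qed.

Lemma In_chainE e z : In z (chainE e) <-> exists i, (i <= length e)%nat /\ z = sfx e i.
Proof.
  unfold chainE. rewrite in_map_iff. split.
  - intros [i [<- Hi]]. apply in_seq in Hi. exists i; split; auto. lia.
  - intros [i [Hi ->]]. exists i; split; auto. apply in_seq; lia.
Qed.

Lemma sfx_full e : sfx e (length e) = gprod e.
Proof. unfold sfx. rewrite Nat.sub_diag. auto. Qed.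

Lemma sfx_0 e : sfx e 0 = 1g.
Proof. unfold sfx. rewrite Nat.sub_0_r, skipn_all. auto. Qed.

Lemma chainE_chain g e : atomic g e -> is_chain X g (chainE e).
Proof.
  intro Ha. pose proof (atomic_geo Ha) as Hgeo. split.
  - intros i j Hij. rewrite length_chainE in Hij. rewrite !nth_chainE by lia. split.
    apply gle_sfx; auto; lia.
    intro E. assert (ell (sfx e i) = ell (sfx e j)) by (rewrite E; auto).
    rewrite !ell_sfx in H; auto; lia.
  - apply Forall_forall. intros z Hz. apply In_chainE in Hz as [i [Hi ->]].
    destruct Ha as [_ [Hp _]]. rewrite <- Hp, <- sfx_full. apply gle_sfx; auto.
Qed.

Lemma chain_cmp {g c x y} : is_chain X g c -> In x c -> In y c -> x = y \/ glt X x y \/ glt X y x.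
Proof.
  intros [Hc _] Hx Hy. apply (In_nth _ _ 1g) in Hx as [i [Hi <-]]. apply (In_nth _ _ 1g) in Hy as [j [Hj <-]].
  destruct (lt_eq_lt_dec i j) as [[L|L]|L]; [right; left; apply Hc; lia | left; subst; auto | right; right; apply Hc; lia].
Qed.

Lemma chainE_max g e : atomic g e -> max_chain X g (chainE e).
Proof.
  intro Ha. pose proof (atomic_geo Ha) as Hgeo. split. apply chainE_chain; auto.
  intros c' Hc' Hinc z Hz.
  assert (Hzg : gle X z g) by (destruct Hc' as [_ HF]; rewrite Forall_forall in HF; auto).
  pose proof (gle_ell Hzg) as Lz. destruct Ha as [HA [HB HC]].
  assert (Hv : In (sfx e (ell z)) c').
  { apply Hinc. apply In_chainE. exists (ell z). split; auto. lia. }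
  destruct (chain_cmp Hc' Hz Hv) as [E|[E|E]].
  - rewrite E. apply In_chainE. exists (ell z); split; auto; lia.
  - apply glt_ell in E. rewrite ell_sfx in E; auto; lia.
  - apply glt_ell in E. rewrite ell_sfx in E; auto; lia.
Qed.

Lemma chain_ext (c : list G) : forall y, is_chain X y c -> InMon X y ->
  exists f, Forall X f /\ gprod f = y /\ length f = ell y /\
    forall z, In z c -> exists k, (k <= length f)%nat /\ z = gprod (firstn k f).
Proof.
  induction c as [|x c IH] using rev_ind; intros y Hc Hy.
  - destruct (fac Hy) as [f [A [B C]]]. exists f; repeat split; auto. intros z [].
  - destruct Hc as [Hc HF].
    assert (Hxy : gle X x y) by (rewrite Forall_forall in HF; apply HF; apply in_or_app; simpl; auto).
    assert (Hc2 : is_chain X x c).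
    { split.
      - intros i j Hij. specialize (Hc i j). rewrite length_app in Hc. simpl in Hc.
        rewrite !app_nth1 in Hc by lia. apply Hc. lia.
      - apply Forall_forall. intros z Hz. apply (In_nth _ _ 1g) in Hz as [i [Hi <-]].
        specialize (Hc i (length c)). rewrite length_app in Hc. simpl in Hc.
        rewrite app_nth1 in Hc by lia. rewrite app_nth2 in Hc by lia. rewrite Nat.sub_diag in Hc.
        apply Hc. lia. }
    destruct Hxy as [Hx [x' [Hx' [E L]]]].
    destruct (IH x Hc2 Hx) as [f1 [A1 [B1 [C1 D1]]]].
    destruct (fac Hx') as [f2 [A2 [B2 C2]]].
    exists (f1 ++ f2). repeat split.
    + apply Forall_app; auto.
    + rewrite gprod_app, B1, C2; auto.
    + rewrite length_app; lia.
    + intros z Hz. apply in_app_or in Hz as [Hz|[<-|[]]].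
      * destruct (D1 z Hz) as [k [Hk ->]]. exists k. split. rewrite length_app; lia.
        rewrite firstn_app. replace (k - length f1)%nat with 0%nat by lia. rewrite app_nil_r; auto.
      * exists (length f1). split. rewrite length_app; lia.
        rewrite firstn_app, Nat.sub_diag, firstn_all, app_nil_r. auto.
Qed.

Lemma pfx_to_sfx (f : list G) : Forall X f -> exists e, Forall X e /\ length e = length f /\
  forall i, (i <= length f)%nat -> gprod (skipn (length f - i) e) = gprod (firstn i f).
Proof.
  induction f as [|t f IH] using rev_ind; intro Hf.
  - exists []. repeat split; auto. intros i Hi. destruct i; simpl; auto.
  - apply Forall_app in Hf as [Hf Ht]. inversion Ht; subst.
    destruct (IH Hf) as [e [A [B C]]].
    exists (conjg (gprod f) t :: e). rewrite length_app. simpl. repeat split.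
    + constructor; auto. apply conjg_X; auto.
    + lia.
    + intros i Hi. destruct (Nat.eq_dec i (S (length f))) as [->|Ne].
      * replace (length f + 1 - S (length f))%nat with 0%nat by lia.
        rewrite firstn_all2 by (rewrite length_app; simpl; lia). simpl.
        specialize (C (length f) (le_n _)). rewrite Nat.sub_diag, firstn_all in C. simpl in C. rewrite C.
        rewrite gprod_app. simpl. unfold conjg. rewrite <- !gmulA, gmulVl, gmul1r. auto.
      * replace (length f + 1 - i)%nat with (S (length f - i)) by lia. simpl.
        rewrite C by lia. rewrite firstn_app. replace (i - length f)%nat with 0%nat by lia.
        rewrite app_nil_r. auto.
Qed.

Lemma max_chain_chainE g c : InMon X g -> max_chain X g c -> exists e, atomic g e /\ c = chainE e.
Proof.
  intros Hg [Hc Hmax].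
  destruct (chain_ext Hc Hg) as [f [A [B [C D]]]].
  destruct (pfx_to_sfx A) as [e [A' [B' C']]].
  assert (Ha : atomic g e).
  { split; auto. split. specialize (C' (length f) (le_n _)). rewrite Nat.sub_diag, firstn_all in C'.
    simpl in C'. rewrite C', B; auto. lia. }
  pose proof (atomic_geo Ha) as Hgeo.
  assert (Hinc : incl c (chainE e)).
  { intros z Hz. destruct (D z Hz) as [k [Hk ->]]. apply In_chainE. exists k. split. lia.
    unfold sfx. rewrite B', C'; auto. }
  pose proof (Hmax _ (chainE_chain Ha) Hinc) as Hinc2.
  exists e. split; auto.
  assert (ND1 : NoDup c).
  { apply (NoDup_nth c 1g). intros i j Hi Hj E.
    destruct (lt_eq_lt_dec i j) as [[L|L]|L]; auto.
    - exfalso. destruct Hc as [Hc _]. destruct (Hc i j) as [_ N]; auto.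
    - exfalso. destruct Hc as [Hc _]. destruct (Hc j i) as [_ N]; auto. }
  assert (ND2 : NoDup (chainE e)).
  { apply (NoDup_nth _ 1g). rewrite length_chainE. intros i j Hi Hj E.
    rewrite !nth_chainE in E by lia.
    assert (ell (sfx e i) = ell (sfx e j)) by (rewrite E; auto). rewrite !ell_sfx in H; auto; lia. }
  pose proof (NoDup_incl_length ND1 Hinc). pose proof (NoDup_incl_length ND2 Hinc2).
  rewrite length_chainE in *.
  assert (Hlen : length c = S (length e)) by lia.
  set (h := fun i => ell (nth i c 1g)).
  assert (Hinc_h : forall i j, (i < j <= length e)%nat -> (h i < h j)%nat).
  { intros i j Hij. apply glt_ell. apply Hc. lia. }
  assert (Hbnd : forall i, (i <= length e)%nat -> (h i <= length e)%nat).
  { intros i Hi. unfold h. destruct Hc as [_ HF]. rewrite Forall_forall in HF.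
    destruct Ha as [_ [_ HL]]. rewrite HL. apply gle_ell, HF, nth_In. lia. }
  assert (Hge : forall i, (i <= length e)%nat -> (i <= h i)%nat).
  { induction i; intros. lia. specialize (IHi ltac:(lia)). specialize (Hinc_h i (S i) ltac:(lia)). lia. }
  assert (Hle : forall k, (k <= length e)%nat -> (h (length e - k) <= length e - k)%nat).
  { induction k; intros. rewrite Nat.sub_0_r. apply Hbnd; lia.
    specialize (IHk ltac:(lia)). specialize (Hinc_h (length e - S k)%nat (length e - k)%nat ltac:(lia)). lia. }
  assert (Hh : forall i, (i <= length e)%nat -> h i = i).
  { intros i Hi. specialize (Hge i Hi). specialize (Hle (length e - i)%nat ltac:(lia)).
    replace (length e - (length e - i))%nat with i in Hle by lia. lia. }
  apply nth_ext with 1g 1g. rewrite length_chainE; auto.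
  intros i Hi. rewrite Hlen in Hi. rewrite nth_chainE by lia.
  assert (Hin : In (sfx e i) c) by (apply Hinc2, In_chainE; exists i; split; auto; lia).
  apply (In_nth _ _ 1g) in Hin as [j [Hj Ej]].
  assert (j = i). { rewrite <- (Hh j) by lia. unfold h. rewrite Ej, ell_sfx; auto. lia. }
  subst; auto.
Qed.

End Chains.
Arguments sfx {G} e i.
Arguments chainE {G} e.
Arguments atomic {G} X g e.

Open Scope R_scope.

Section Blocks.
Variable G : Group.
Variable X : G -> Prop.
Local Notation "x ** y" := (gmul G x y) (at level 40, left associativity).
Local Notation "1g" := (gone G).
Local Notation inv := (ginv G).
Local Notation ell := (ell X).

Definition Ublk (L : list (R * G)) (r : R) : G :=
  fold_right (fun p acc => if Req_EM_T (fst p) r then snd p ** acc else acc) 1g L.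

Definition cnt (L : list (R * G)) (r : R) : nat :=
  fold_right (fun p acc => if Req_EM_T (fst p) r then S acc else acc) 0%nat L.

Lemma Ublk_app L1 L2 r : Ublk (L1 ++ L2) r = Ublk L1 r ** Ublk L2 r.
Proof.
  induction L1 as [|[a b] L1 IH]; simpl. rewrite gmul1l; auto.
  destruct (Req_EM_T a r); auto. rewrite IH, gmulA; auto.
Qed.

Lemma Ublk_notin L r : ~ In r (map fst L) -> Ublk L r = 1g.
Proof.
  induction L as [|[a b] L IH]; simpl; auto. intro H.
  destruct (Req_EM_T a r). exfalso; auto. apply IH; auto.
Qed.

Lemma cnt_notin L r : ~ In r (map fst L) -> cnt L r = 0%nat.
Proof.
  induction L as [|[a b] L IH]; simpl; auto. intro H.
  destruct (Req_EM_T a r). exfalso; auto. apply IH; auto.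
Qed.

Lemma Ublk_all L r : Forall (fun p => fst p = r) L -> Ublk L r = gprod (map snd L).
Proof.
  induction L as [|[a b] L IH]; simpl; auto. intro H. inversion H as [|? ? H1 H2]; subst. simpl in *.
  destruct (Req_EM_T _ _); [|congruence]. rewrite IH; auto.
Qed.

Lemma Ublk_lookup L r v : NoDup (map fst L) -> In (r, v) L -> Ublk L r = v.
Proof.
  induction L as [|[a b] L IH]; simpl. intros _ [].
  intros ND [E|Hin]; inversion ND; subst.
  - inversion E; subst. destruct (Req_EM_T r r); [|congruence]. rewrite Ublk_notin; auto. apply gmul1r.
  - destruct (Req_EM_T a r). subst. exfalso. apply H1. apply in_map_iff. exists (r, v); auto.
    auto.
Qed.

Lemma InMon_Ublk L r : Forall X (map snd L) -> InMon X (Ublk L r).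
Proof.
  induction L as [|[a b] L IH]; simpl; intro H. apply InMon_one.
  inversion H; subst. destruct (Req_EM_T a r); auto.
  apply InMon_mul; auto. exists [b]. simpl. rewrite gmul1r; auto.
Qed.

Fixpoint compL (L : list (R * G)) : list (R * list G) :=
  match L with
  | [] => []
  | (r, t) :: L' => match compL L' with
      | (r', bl) :: rest => if Req_EM_T r r' then (r, t :: bl) :: rest else (r, [t]) :: (r', bl) :: rest
      | [] => [(r, [t])] end end.

Definition mapg (CL : list (R * list G)) : list (R * G) := map (fun p => (fst p, gprod (snd p))) CL.

Lemma compL_head r t L : exists bl rest, compL ((r, t) :: L) = (r, bl) :: rest.
Proof.
  simpl. destruct (compL L) as [|[r' bl] rest]. eauto.
  destruct (Req_EM_T r r'); eauto.
Qed.

Lemma compL_Ublk L r : Ublk L r = Ublk (mapg (compL L)) r.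
Proof.
  induction L as [|[a b] L IH]; simpl; auto.
  rewrite IH. destruct (compL L) as [|[r' bl] rest]; simpl.
  - rewrite !gmul1r; auto.
  - destruct (Req_EM_T a r'); simpl.
    + subst a. destruct (Req_EM_T r' r); auto. rewrite gmulA; auto.
    + rewrite gmul1r; auto.
Qed.

Lemma compL_concat L : concat (map snd (compL L)) = map snd L.
Proof.
  induction L as [|[a b] L IH]; simpl; auto.
  destruct (compL L) as [|[r' bl] rest] eqn:E; simpl in *.
  - rewrite <- IH; auto.
  - destruct (Req_EM_T a r'); simpl; rewrite <- IH; auto.
Qed.

Lemma compL_nonempty L : Forall (fun p => snd p <> []) (compL L).
Proof.
  induction L as [|[a b] L IH]; simpl; auto.
  destruct (compL L) as [|[r' bl] rest] eqn:E; simpl in *.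
  - constructor; auto. simpl; congruence.
  - inversion IH; subst. destruct (Req_EM_T a r'); constructor; simpl; auto; congruence.
Qed.

Lemma compL_pos_incl L x : In x (map fst (compL L)) -> In x (map fst L).
Proof.
  induction L as [|[a b] L IH]; simpl; auto.
  destruct (compL L) as [|[r' bl] rest] eqn:E; simpl in *. tauto.
  destruct (Req_EM_T a r'); simpl; intros [H|H]; try (left; exact H); right; apply IH; simpl; tauto.
Qed.

Lemma compL_sorted L : StronglySorted Rle (map fst L) -> StronglySorted Rlt (map fst (compL L)).
Proof.
  induction L as [|[a b] L IH]; simpl; intro H. constructor.
  apply StronglySorted_inv in H as [H1 H2].
  specialize (IH H1).
  destruct L as [|[a' b'] L'].
  - simpl. repeat constructor.
  - destruct (compL_head a' b' L') as [bl [rest Eh]].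
    change (compL ((a', b') :: L')) with (compL ((a', b') :: L')) in *.
    rewrite Eh in IH |- *. simpl in H2. inversion H2; subst. simpl in H3.
    destruct (Req_EM_T a a'); simpl.
    + subst. simpl in IH. exact IH.
    + simpl in IH. constructor; auto. apply StronglySorted_inv in IH as [IH1 IH2].
      constructor. lra. eapply Forall_impl; [|exact IH2]. intros; simpl in *; lra.
Qed.

Lemma compL_shape L M : map fst L = map fst M ->
  map (fun p => (fst p, length (snd p))) (compL L) = map (fun p => (fst p, length (snd p))) (compL M).
Proof.
  revert M. induction L as [|[a b] L IH]; intros [|[a' b'] M]; simpl; try discriminate; auto.
  intro E. inversion E; subst. specialize (IH M H1).
  destruct (compL L) as [|[r bl] rest] eqn:E1; destruct (compL M) as [|[r' bl'] rest'] eqn:E2;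
    simpl in IH; try discriminate; auto.
  inversion IH; subst. destruct (Req_EM_T a' r'); simpl; rewrite ?H3, ?H2; auto.
Qed.

Lemma gprod_concat (BL : list (list G)) : gprod (concat BL) = gprod (map gprod BL).
Proof. induction BL; simpl; auto. rewrite gprod_app, IHBL; auto. Qed.

Lemma geo_concat (BL : list (list G)) : geo X (concat BL) -> Forall (geo X) BL.
Proof.
  induction BL; simpl; intro H; constructor; apply geo_app in H; tauto.
Qed.

Lemma pos_NoDup (A : list R) : StronglySorted Rlt A -> NoDup A.
Proof.
  induction A; intro H; constructor; apply StronglySorted_inv in H as [H1 H2]; auto.
  intro Hin. rewrite Forall_forall in H2. specialize (H2 a Hin). lra.
Qed.

Lemma mapg_fst CL : map fst (mapg CL) = map fst CL.
Proof. unfold mapg. rewrite map_map. auto. Qed.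

Lemma gprod_det L M : map fst L = map fst M -> StronglySorted Rle (map fst L) ->
  Ublk L = Ublk M -> gprod (map snd L) = gprod (map snd M).
Proof.
  intros Ep HS EU.
  assert (HSM : StronglySorted Rle (map fst M)) by (rewrite <- Ep; auto).
  assert (Key : forall N, StronglySorted Rle (map fst N) ->
     gprod (map snd N) = gprod (map (Ublk N) (map fst (compL N)))).
  { intros N HN. rewrite <- compL_concat, gprod_concat. f_equal.
    rewrite map_map, map_map. apply map_ext_in. intros [r bl] Hin. simpl.
    rewrite compL_Ublk. symmetry. apply Ublk_lookup.
    rewrite mapg_fst. apply pos_NoDup, compL_sorted; auto.
    unfold mapg. apply in_map_iff. exists (r, bl); auto. }
  rewrite (Key L HS), (Key M HSM), EU. f_equal.
  pose proof (compL_shape _ _ Ep) as Sh. apply (f_equal (map fst)) in Sh. rewrite !map_map in Sh. simpl in Sh.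
  change (map fst (compL L) = map fst (compL M)) in Sh. rewrite Sh; auto.
Qed.

Definition cntB (CL : list (R * list G)) (r : R) : nat :=
  fold_right (fun p acc => if Req_EM_T (fst p) r then (length (snd p) + acc)%nat else acc) 0%nat CL.

Lemma compL_cnt L r : cnt L r = cntB (compL L) r.
Proof.
  induction L as [|[a b] L IH]; simpl; auto.
  rewrite IH. destruct (compL L) as [|[r' bl] rest]; simpl.
  - destruct (Req_EM_T a r); lia.
  - destruct (Req_EM_T a r'); simpl.
    + subst a. destruct (Req_EM_T r' r); lia.
    + destruct (Req_EM_T a r); lia.
Qed.

Lemma cntB_notin CL r : ~ In r (map fst CL) -> cntB CL r = 0%nat.
Proof.
  induction CL as [|[a b] L IH]; simpl; auto. intro H.
  destruct (Req_EM_T a r). exfalso; auto. apply IH; auto.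
Qed.

Lemma cntB_lookup CL r bl : NoDup (map fst CL) -> In (r, bl) CL -> cntB CL r = length bl.
Proof.
  induction CL as [|[a b] L IH]; simpl. intros _ [].
  intros ND [E|Hin]; inversion ND as [|? ? H1 H2]; clear ND.
  - inversion E; subst. destruct (Req_EM_T r r); [|congruence]. rewrite cntB_notin by auto; lia.
  - destruct (Req_EM_T a r) as [e|e]. exfalso. apply H1. rewrite e. apply in_map_iff. exists (r, bl); auto.
    auto.
Qed.

Lemma ell_Ublk L r : geo X (map snd L) -> StronglySorted Rle (map fst L) -> ell (Ublk L r) = cnt L r.
Proof.
  intros Hg HS. rewrite compL_Ublk, compL_cnt.
  assert (ND : NoDup (map fst (compL L))) by (apply pos_NoDup, compL_sorted; auto).
  assert (Hgb : Forall (geo X) (map snd (compL L))) by (apply geo_concat; rewrite compL_concat; auto).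
  destruct (in_dec Req_EM_T r (map fst (compL L))) as [Hin|Hnin].
  - apply in_map_iff in Hin as [[r' bl] [Er Hin]]. simpl in Er; subst r'.
    rewrite (@Ublk_lookup _ r (gprod bl)). rewrite (@cntB_lookup (compL L) r bl ND Hin).
    rewrite Forall_forall in Hgb. apply Hgb. apply in_map_iff. exists (r, bl); auto.
    rewrite mapg_fst; auto. unfold mapg. apply in_map_iff. exists (r, bl); auto.
  - rewrite Ublk_notin, cntB_notin; auto. apply ell_one. rewrite mapg_fst; auto.
Qed.

End Blocks.
Arguments Ublk {G} L r.
Arguments cnt {G} L r.
Arguments compL {G} L.
Arguments mapg {G} CL.
Arguments cntB {G} CL r.

Open Scope R_scope.

Lemma SS_nth (A : list R) i j : StronglySorted Rle A -> (i <= j)%nat -> (j < length A)%nat -> nth i A 0 <= nth j A 0.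
Proof.
  revert i j. induction A as [|a A IH]; intros i j H Hij Hj; simpl in *. lia.
  apply StronglySorted_inv in H as [H1 H2]. destruct i, j.
  - lra.
  - rewrite Forall_forall in H2. apply H2, nth_In. lia.
  - lia.
  - apply IH; auto; lia.
Qed.

Definition cntR (A : list R) (r : R) : nat :=
  fold_right (fun a acc => if Req_EM_T a r then S acc else acc) 0%nat A.

Lemma cntR_In A r : (0 < cntR A r)%nat -> In r A.
Proof.
  induction A; simpl. lia. destruct (Req_EM_T a r); auto.
Qed.

Lemma sorted_cnt_eq (A B : list R) : StronglySorted Rle A -> StronglySorted Rle B ->
  (forall r, cntR A r = cntR B r) -> A = B.
Proof.
  revert B. induction A as [|a A IH]; intros B HA HB Hc.
  - destruct B as [|b B]; auto. specialize (Hc b). simpl in Hc. destruct (Req_EM_T b b); [lia|congruence].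
  - destruct B as [|b B].
    + specialize (Hc a). simpl in Hc. destruct (Req_EM_T a a); [lia|congruence].
    + assert (Ha : In a (b :: B)). { apply cntR_In. rewrite <- Hc. simpl. destruct (Req_EM_T a a); [lia|congruence]. }
      assert (Hb : In b (a :: A)). { apply cntR_In. rewrite Hc. simpl. destruct (Req_EM_T b b); [lia|congruence]. }
      apply StronglySorted_inv in HA as [HA1 HA2]. apply StronglySorted_inv in HB as [HB1 HB2].
      rewrite Forall_forall in HA2, HB2.
      assert (a = b).
      { destruct Ha as [Ha|Ha]; auto. destruct Hb as [Hb|Hb]; auto.
        specialize (HA2 b Hb). specialize (HB2 a Ha). lra. }
      subst b. f_equal. apply IH; auto. intro r. specialize (Hc r). simpl in Hc.
      destruct (Req_EM_T a r); lia.
Qed.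

Lemma sorted_split (A : list R) r : StronglySorted Rle A -> exists k1 k2, (k1 <= k2 <= length A)%nat /\
  (forall j, (j < k1)%nat -> nth j A 0 < r) /\
  (forall j, (k1 <= j < k2)%nat -> nth j A 0 = r) /\
  (forall j, (k2 <= j < length A)%nat -> r < nth j A 0).
Proof.
  induction A as [|a A IH]; intro H.
  - exists 0%nat, 0%nat. simpl. repeat split; intros; lia.
  - apply StronglySorted_inv in H as [H1 H2]. destruct (IH H1) as [k1 [k2 [K [P1 [P2 P3]]]]].
    rewrite Forall_forall in H2.
    destruct (Rlt_le_dec a r).
    + exists (S k1), (S k2). simpl. repeat split; try lia.
      * intros [|j] Hj; simpl; auto. apply P1; lia.
      * intros [|j] Hj; simpl. lia. apply P2; lia.
      * intros [|j] Hj; simpl. lia. apply P3; lia.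
    + destruct (Req_EM_T a r) as [E|E].
      * subst a. exists 0%nat, (S k2). simpl.
        assert (k1 = 0%nat).
        { destruct k1; auto. specialize (P1 0%nat ltac:(lia)).
          assert (r <= nth 0 A 0) by (apply H2, nth_In; lia). lra. }
        subst k1. repeat split; try lia.
        -- intros [|j] Hj; simpl; auto. apply P2; lia.
        -- intros [|j] Hj; simpl. lia. apply P3; lia.
      * exists 0%nat, 0%nat. simpl. repeat split; try lia.
        intros [|j] Hj; simpl. lra. assert (a <= nth j A 0) by (apply H2, nth_In; lia). lra.
Qed.

Section Canon.
Variable G : Group.
Variable X : G -> Prop.
Local Notation "x ** y" := (gmul G x y) (at level 40, left associativity).
Local Notation "1g" := (gone G).
Local Notation inv := (ginv G).
Local Notation ell := (ell X).
Variable g : G.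

Definition good (L : list (R * G)) :=
  atomic X g (map snd L) /\ StronglySorted Rle (map fst L) /\ Forall (fun r => 0 <= r <= 1) (map fst L).

Definition afun (A : list R) : nat -> R := fun j => nth (j - 1) A 0.

Definition Yf (A : list R) (j : nat) : R :=
  if Nat.eqb j 0 then 0 else if Nat.eqb j (S (length A)) then 1 else nth (j - 1) A 0.

Definition wt (A : list R) (i : nat) : R := Yf A (S (length A) - i) - Yf A (length A - i).

Definition OptL (L : list (R * G)) : G -> R := oc_chart (chainE (map snd L)) (afun (map fst L)).

Fixpoint rsumL (l : list R) : R := match l with [] => 0 | a :: l' => a + rsumL l' end.

Lemma OptL_eq L z : OptL L z =
  fold_right Rplus 0 (map (fun i => if excluded_middle_informative (z = sfx (map snd L) i)
     then wt (map fst L) i else 0) (seq 0 (S (length L)))).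
Proof.
  unfold OptL, oc_chart. cbv zeta. rewrite length_chainE, !length_map.
  replace (S (length L) - 1)%nat with (length L) by lia.
  f_equal. apply map_ext_in. intros i Hi. apply in_seq in Hi.
  rewrite nth_chainE by (rewrite length_map; lia).
  destruct (excluded_middle_informative _); auto.
  unfold wt, Yf, afun. rewrite length_map. auto.
Qed.

Lemma sum_single (f : nat -> G) (w : nat -> R) z m i0 :
  (i0 < m)%nat -> (forall j, (j < m)%nat -> j <> i0 -> f j <> z) ->
  fold_right Rplus 0 (map (fun i => if excluded_middle_informative (z = f i) then w i else 0) (seq 0 m))
  = if excluded_middle_informative (z = f i0) then w i0 else 0.
Proof.
  intros Hi Hf. assert (Gen : forall s, (s + m <= m)%nat \/ True -> True) by auto. clear Gen.
  assert (forall s k, (s + k <= m)%nat ->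
    fold_right Rplus 0 (map (fun i => if excluded_middle_informative (z = f i) then w i else 0) (seq s k))
    = if (Nat.leb s i0 && Nat.ltb i0 (s + k))%bool then
        (if excluded_middle_informative (z = f i0) then w i0 else 0) else 0).
  { intros s k. revert s. induction k; intros s Hs; simpl.
    - destruct (Nat.leb s i0) eqn:E1; destruct (Nat.ltb i0 (s + 0)) eqn:E2; simpl; auto.
      apply Nat.leb_le in E1. apply Nat.ltb_lt in E2. lia.
    - rewrite IHk by lia. destruct (Nat.eq_dec s i0) as [->|Ne].
      + replace (Nat.leb i0 i0 && Nat.ltb i0 (i0 + S k))%bool with true.
        replace (Nat.leb (S i0) i0 && Nat.ltb i0 (S i0 + k))%bool with false.
        destruct (excluded_middle_informative _); lra.
        symmetry. apply andb_false_iff. left. apply Nat.leb_gt. lia.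
        symmetry. apply andb_true_iff. split. apply Nat.leb_le; lia. apply Nat.ltb_lt; lia.
      + destruct (excluded_middle_informative (z = f s)) as [E|E].
        { exfalso. apply (Hf s); auto; lia. }
        replace (Nat.leb s i0 && Nat.ltb i0 (s + S k))%bool with (Nat.leb (S s) i0 && Nat.ltb i0 (S s + k))%bool.
        lra.
        destruct (Nat.leb (S s) i0) eqn:E1; destruct (Nat.leb s i0) eqn:E2;
          destruct (Nat.ltb i0 (S s + k)) eqn:E3; destruct (Nat.ltb i0 (s + S k)) eqn:E4; simpl; auto;
          repeat match goal with H : Nat.leb _ _ = true |- _ => apply Nat.leb_le in H
                 | H : Nat.leb _ _ = false |- _ => apply Nat.leb_gt in H
                 | H : Nat.ltb _ _ = true |- _ => apply Nat.ltb_lt in H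
                 | H : Nat.ltb _ _ = false |- _ => apply Nat.ltb_ge in H end; lia. }
  rewrite H by lia. replace (Nat.leb 0 i0 && Nat.ltb i0 (0 + m))%bool with true; auto.
  symmetry. apply andb_true_iff. split. apply Nat.leb_le; lia. apply Nat.ltb_lt; lia.
Qed.

Definition Canon (L M : list (R * G)) :=
  map fst L = map fst M /\
  forall i, (i <= length L)%nat -> wt (map fst L) i <> 0 -> sfx (map snd L) i = sfx (map snd M) i.

Lemma length_good L : good L -> length L = ell g.
Proof. intros [[_ [_ H]] _]. rewrite length_map in H; auto. Qed.

Lemma Yf_eq_nth (A B : list R) : length A = length B ->
  (forall k, (k <= length A)%nat -> Yf A (S k) - Yf A k = Yf B (S k) - Yf B k) -> A = B.
Proof.
  intros Hl Hk.
  assert (HY : forall k, (k <= S (length A))%nat -> Yf A k = Yf B k).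
  { induction k; intros. unfold Yf; simpl; auto. specialize (Hk k ltac:(lia)). specialize (IHk ltac:(lia)). lra. }
  apply nth_ext with 0 0; auto. intros j Hj. specialize (HY (S j) ltac:(lia)).
  unfold Yf in HY. simpl in HY. rewrite <- Hl in HY.
  destruct (Nat.eqb j (length A)) eqn:E. apply Nat.eqb_eq in E; lia.
  rewrite !Nat.sub_0_r in HY. auto.
Qed.

Lemma O_to_Canon L M : good L -> good M -> OptL L = OptL M -> Canon L M.
Proof.
  intros HL HM E.
  assert (Hn : length L = length M) by (rewrite !length_good; auto).
  pose proof (atomic_geo (proj1 HL)) as gL. pose proof (atomic_geo (proj1 HM)) as gM.
  set (n := length L) in *.
  assert (Key : forall (L M : list (R*G)) i, good L -> good M -> length L = length M -> (i <= length L)%nat ->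
     OptL M (sfx (map snd L) i) = if excluded_middle_informative (sfx (map snd L) i = sfx (map snd M) i) then wt (map fst M) i else 0).
  { clear. intros L M i HL HM Hn Hi.
    pose proof (atomic_geo (proj1 HL)) as gL. pose proof (atomic_geo (proj1 HM)) as gM.
    rewrite OptL_eq. apply sum_single. lia.
    intros j Hj Nj Ej. assert (ell (sfx (map snd M) j) = ell (sfx (map snd L) i)) by (rewrite Ej; auto).
    rewrite !ell_sfx in H; auto; rewrite length_map; lia. }
  assert (W : forall i, (i <= n)%nat -> wt (map fst L) i = wt (map fst M) i /\
             (wt (map fst L) i <> 0 -> sfx (map snd L) i = sfx (map snd M) i)).
  { intros i Hi. pose proof (Key L M i HL HM Hn Hi) as K1. pose proof (Key M M i HM HM eq_refl ltac:(lia)) as K2.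
    pose proof (Key L L i HL HL eq_refl ltac:(lia)) as K3. pose proof (Key M L i HM HL (eq_sym Hn) ltac:(lia)) as K4.
    destruct (excluded_middle_informative (sfx (map snd M) i = sfx (map snd M) i)); [|congruence].
    destruct (excluded_middle_informative (sfx (map snd L) i = sfx (map snd L) i)); [|congruence].
    rewrite <- E in K1. rewrite E in K4. rewrite K3 in K1. rewrite K2 in K4.
    destruct (excluded_middle_informative (sfx (map snd L) i = sfx (map snd M) i)) as [Q|Q].
    - split; auto.
    - destruct (excluded_middle_informative (sfx (map snd M) i = sfx (map snd L) i)) as [Q'|Q']. congruence.
      split. lra. intro; exfalso; auto. }
  split.
  - apply Yf_eq_nth. rewrite !length_map; auto.
    intros k Hk. rewrite length_map in Hk. destruct (W (n - k)%nat ltac:(lia)) as [W1 _].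
    unfold wt in W1. rewrite !length_map in W1. fold n in W1. rewrite <- Hn in W1. fold n in W1.
    replace (S n - (n - k))%nat with (S k) in W1 by lia. replace (n - (n - k))%nat with k in W1 by lia.
    exact W1.
  - intros i Hi. apply W; auto.
Qed.

Lemma Canon_to_O L M : good L -> good M -> Canon L M -> OptL L = OptL M.
Proof.
  intros HL HM [EA ES].
  assert (Hn : length L = length M) by (rewrite !length_good; auto).
  apply functional_extensionality. intro z. rewrite !OptL_eq, <- Hn, <- EA. f_equal.
  apply map_ext_in. intros i Hi. apply in_seq in Hi.
  destruct (Req_EM_T (wt (map fst L) i) 0) as [Z|Z].
  - rewrite Z. destruct (excluded_middle_informative _); destruct (excluded_middle_informative _); auto.
  - rewrite ES; auto. lia.
Qed.

Lemma cnt_cntR (L : list (R * G)) r : cnt L r = cntR (map fst L) r.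
Proof. induction L as [|[a b] L IH]; simpl; auto. destruct (Req_EM_T a r); auto. Qed.

Lemma SS_skipn (A : list R) k : StronglySorted Rle A -> StronglySorted Rle (skipn k A).
Proof.
  revert A. induction k; intros A H; simpl; auto. destruct A; simpl; auto.
  apply StronglySorted_inv in H as [H _]. auto.
Qed.

Lemma wt_mid (A : list R) i : (0 < length A - i < length A)%nat ->
  wt A i = nth (length A - i) A 0 - nth (length A - i - 1) A 0.
Proof.
  intros H. unfold wt, Yf.
  destruct (Nat.eqb (S (length A) - i) 0) eqn:E1. apply Nat.eqb_eq in E1; lia.
  destruct (Nat.eqb (S (length A) - i) (S (length A))) eqn:E2. apply Nat.eqb_eq in E2; lia.
  destruct (Nat.eqb (length A - i) 0) eqn:E3. apply Nat.eqb_eq in E3; lia.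
  destruct (Nat.eqb (length A - i) (S (length A))) eqn:E4. apply Nat.eqb_eq in E4; lia.
  replace (S (length A) - i - 1)%nat with (length A - i)%nat by lia. auto.
Qed.

Lemma sfx_top L : good L -> sfx (map snd L) (length L) = g.
Proof.
  intro H. replace (length L) with (length (map snd L)) by apply length_map. rewrite sfx_full. apply H.
Qed.

Lemma W_to_Canon L M : good L -> good M -> Ublk L = Ublk M -> Canon L M.
Proof.
  intros HL HM E.
  assert (Hn : length L = length M) by (rewrite !length_good; auto).
  pose proof (atomic_geo (proj1 HL)) as gL. pose proof (atomic_geo (proj1 HM)) as gM.
  assert (EA : map fst L = map fst M).
  { apply sorted_cnt_eq. apply HL. apply HM. intro r. rewrite <- !cnt_cntR.
    rewrite <- (ell_Ublk (X:=X) L r gL (proj1 (proj2 HL))), <- (ell_Ublk (X:=X) M r gM (proj1 (proj2 HM))), E. auto. }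
  split; auto.
  intros i Hi Hw.
  destruct (Nat.eq_dec i (length L)) as [->|N1].
  { rewrite (sfx_top HL). rewrite Hn, (sfx_top HM). auto. }
  destruct (Nat.eq_dec i 0) as [->|N0].
  { rewrite !sfx_0; auto. }
  set (k := (length L - i)%nat).
  assert (Hk : (0 < k < length L)%nat) by (unfold k; lia).
  rewrite wt_mid in Hw by (rewrite length_map; lia). rewrite length_map in Hw. fold k in Hw.
  pose proof (proj1 (proj2 HL)) as SL.
  assert (Hlt : nth (k - 1) (map fst L) 0 < nth k (map fst L) 0).
  { pose proof (@SS_nth _ (k - 1)%nat k SL ltac:(lia) ltac:(rewrite length_map; lia)). lra. }
  unfold sfx. rewrite !length_map, <- Hn. fold k. rewrite !skipn_map.
  apply gprod_det.
  - rewrite <- !skipn_map, EA; auto.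
  - rewrite <- skipn_map. apply SS_skipn; auto.
  - apply functional_extensionality. intro r.
    pose proof (f_equal (fun f => f r) E) as Er. simpl in Er.
    rewrite <- (firstn_skipn k L), <- (firstn_skipn k M) in Er. rewrite !Ublk_app in Er.
    assert (Sep : ~ In r (map fst (firstn k L)) \/ ~ In r (map fst (skipn k L))).
    { destruct (in_dec Req_EM_T r (map fst (firstn k L))) as [I1|I1]; auto. right. intro I2.
      rewrite <- firstn_map in I1. rewrite <- skipn_map in I2.
      apply (In_nth _ _ 0) in I1 as [j1 [Hj1 E1]]. apply (In_nth _ _ 0) in I2 as [j2 [Hj2 E2]].
      rewrite length_firstn, length_map in Hj1. rewrite length_skipn, length_map in Hj2.
      rewrite nth_firstn in E1. destruct (Nat.ltb j1 k) eqn:Q; [|apply Nat.ltb_ge in Q; lia].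
      rewrite nth_skipn in E2.
      pose proof (@SS_nth _ j1 (k - 1)%nat SL ltac:(lia) ltac:(rewrite length_map; lia)).
      pose proof (@SS_nth _ k (k + j2)%nat SL ltac:(lia) ltac:(rewrite length_map; lia)). lra. }
    assert (EpF : map fst (firstn k L) = map fst (firstn k M)) by (rewrite <- !firstn_map, EA; auto).
    assert (EpS : map fst (skipn k L) = map fst (skipn k M)) by (rewrite <- !skipn_map, EA; auto).
    destruct Sep as [S1|S2].
    + rewrite (Ublk_notin _ (firstn k L) r) in Er by auto.
      rewrite (Ublk_notin _ (firstn k M) r) in Er by (rewrite <- EpF; auto). rewrite !gmul1l in Er. exact Er.
    + rewrite (Ublk_notin _ (skipn k L) r) by auto. rewrite (Ublk_notin _ (skipn k M) r) by (rewrite <- EpS; auto). auto.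
Qed.

Lemma Canon_to_W L M : good L -> good M -> Canon L M -> Ublk L = Ublk M.
Proof.
  intros HL HM [EA ES].
  assert (Hn : length L = length M) by (rewrite !length_good; auto).
  pose proof (proj1 (proj2 HL)) as SL.
  apply functional_extensionality. intro r.
  destruct (sorted_split r SL) as [k1 [k2 [K [P1 [P2 P3]]]]]. rewrite length_map in K, P3.
  assert (Dec : forall N : list (R * G), map fst N = map fst L ->
     Ublk N r = gprod (map snd (firstn (k2 - k1) (skipn k1 N))) /\
     sfx (map snd N) (length N - k1) = gprod (map snd (firstn (k2 - k1) (skipn k1 N))) ** sfx (map snd N) (length N - k2)).
  { intros N EN. assert (HlN : length N = length L) by (rewrite <- (length_map fst N), EN, length_map; auto).
    assert (HN : firstn k1 N ++ firstn (k2 - k1) (skipn k1 N) ++ skipn k2 N = N).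
    { replace k2 with (k2 - k1 + k1)%nat at 2 by lia. rewrite <- skipn_skipn, !firstn_skipn. auto. }
    split.
    - rewrite <- HN at 1. rewrite !Ublk_app. rewrite (Ublk_notin _ (firstn k1 N) r), (Ublk_notin _ (skipn k2 N) r), Ublk_all.
      rewrite gmul1l, gmul1r; auto.
      + apply Forall_forall. intros [a b] Hab. simpl.
        assert (In a (map fst (firstn (k2 - k1) (skipn k1 N)))) by (apply in_map_iff; exists (a, b); auto).
        rewrite <- firstn_map, <- skipn_map, EN in H. apply (In_nth _ _ 0) in H as [j [Hj Ej]].
        rewrite length_firstn, length_skipn, length_map in Hj. rewrite nth_firstn, nth_skipn in Ej.
        destruct (Nat.ltb j (k2 - k1)) eqn:Q; [|apply Nat.ltb_ge in Q; lia]. rewrite <- Ej. apply P2. lia.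
      + intro H. rewrite <- skipn_map, EN in H. apply (In_nth _ _ 0) in H as [j [Hj Ej]].
        rewrite length_skipn, length_map in Hj. rewrite nth_skipn in Ej.
        assert (r < nth (k2 + j) (map fst L) 0) by (apply P3; lia). lra.
      + intro H. rewrite <- firstn_map, EN in H. apply (In_nth _ _ 0) in H as [j [Hj Ej]].
        rewrite length_firstn, length_map in Hj. rewrite nth_firstn in Ej.
        destruct (Nat.ltb j k1) eqn:Q; [|apply Nat.ltb_ge in Q; lia].
        assert (nth j (map fst L) 0 < r) by (apply P1; lia). lra.
    - unfold sfx. rewrite !length_map, HlN.
      replace (length L - (length L - k1))%nat with k1 by lia.
      replace (length L - (length L - k2))%nat with k2 by lia.
      rewrite <- (firstn_skipn (k2 - k1) (skipn k1 (map snd N))) at 1.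
      rewrite gprod_app, skipn_skipn, !skipn_map, firstn_map. replace (k2 - k1 + k1)%nat with k2 by lia. auto. }
  destruct (Dec L eq_refl) as [DL1 DL2]. destruct (Dec M (eq_sym EA)) as [DM1 DM2].
  rewrite DL1, DM1.
  destruct (Nat.eq_dec k1 k2) as [Q|Q].
  { rewrite Q, Nat.sub_diag. simpl. auto. }
  assert (S1 : sfx (map snd L) (length L - k1) = sfx (map snd M) (length M - k1)).
  { destruct (Nat.eq_dec k1 0) as [->|Q1].
    - rewrite !Nat.sub_0_r, (sfx_top HL), (sfx_top HM); auto.
    - rewrite <- Hn. apply ES. lia. rewrite wt_mid by (rewrite length_map; lia). rewrite length_map.
      replace (length L - (length L - k1))%nat with k1 by lia.
      rewrite (P2 k1) by lia. pose proof (P1 (k1 - 1)%nat ltac:(lia)). lra. }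
  assert (S2 : sfx (map snd L) (length L - k2) = sfx (map snd M) (length M - k2)).
  { destruct (Nat.eq_dec k2 (length L)) as [Q2|Q2].
    - rewrite <- Hn, Q2, Nat.sub_diag, !sfx_0; auto.
    - rewrite <- Hn. apply ES. lia. rewrite wt_mid by (rewrite length_map; lia). rewrite length_map.
      replace (length L - (length L - k2))%nat with k2 by lia.
      rewrite (P2 (k2 - 1)%nat) by lia. pose proof (P3 k2 ltac:(lia)). lra. }
  rewrite S1, S2 in DL2. rewrite DM2 in DL2. apply g_cancel_r in DL2. auto.
Qed.

End Canon.
Arguments good {G} X g L.
Arguments OptL {G} L.
Arguments Canon {G} L M.

Open Scope R_scope.

Definition in01 (r : R) := 0 <= r <= 1.

Lemma map_fst_combine {A B : Type} (l : list A) (l' : list B) : length l = length l' -> map fst (combine l l') = l.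
Proof. revert l'. induction l; intros [|b l'] H; simpl in *; try discriminate; auto. rewrite IHl; auto. Qed.

Lemma map_snd_combine {A B : Type} (l : list A) (l' : list B) : length l = length l' -> map snd (combine l l') = l'.
Proof. revert l'. induction l; intros [|b l'] H; simpl in *; try discriminate; auto. rewrite IHl; auto. Qed.

Lemma Sorted_nth (A : list R) : (forall i, (S i < length A)%nat -> nth i A 0 <= nth (S i) A 0) -> Sorted Rle A.
Proof.
  induction A as [|a A IH]; intro H. constructor.
  constructor. apply IH. intros i Hi. apply (H (S i)). simpl; lia.
  destruct A as [|b A]. constructor. constructor. apply (H 0%nat). simpl; lia.
Qed.

Lemma Rle_trans' : Relations_1.Transitive Rle.
Proof. intros a b c; lra. Qed.

Lemma orth_afun (A : list R) : orthoscheme (length A) (afun A) <-> StronglySorted Rle A /\ Forall in01 A.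
Proof.
  unfold afun. split.
  - intros [H1 H2]. split.
    + apply Sorted_StronglySorted. apply Rle_trans'. apply Sorted_nth. intros i Hi.
      specialize (H2 (S i) ltac:(lia)). simpl in H2. rewrite Nat.sub_0_r in H2. exact H2.
    + apply Forall_forall. intros x Hx. apply (In_nth _ _ 0) in Hx as [i [Hi <-]].
      specialize (H1 (S i) ltac:(lia)). simpl in H1. rewrite Nat.sub_0_r in H1. exact H1.
  - intros [H1 H2]. split.
    + intros j Hj. rewrite Forall_forall in H2. apply H2, nth_In. lia.
    + intros j Hj. simpl. rewrite Nat.sub_0_r. apply SS_nth; auto; lia.
Qed.

Lemma SS_weaken (A : list R) : StronglySorted Rlt A -> StronglySorted Rle A.
Proof.
  induction A; intro H; constructor; apply StronglySorted_inv in H as [H1 H2]; auto.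
  eapply Forall_impl; [|exact H2]. intros; simpl in *; lra.
Qed.

Lemma SS_snoc (R0 : R -> R -> Prop) (A : list R) b : StronglySorted R0 A -> Forall (fun a => R0 a b) A ->
  StronglySorted R0 (A ++ [b]).
Proof.
  induction A as [|a A IH]; intros H1 H2; simpl. repeat constructor.
  apply StronglySorted_inv in H1 as [H1 H3]. inversion H2; subst.
  constructor. apply IH; auto. apply Forall_app; split; auto.
Qed.

Lemma map_afun_seq (A : list R) : map (afun A) (seq 1 (length A)) = A.
Proof.
  apply nth_ext with 0 0. rewrite length_map, length_seq; auto.
  intros i Hi. rewrite length_map, length_seq in Hi.
  rewrite nth_indep with (d' := afun A 0%nat) by (rewrite length_map, length_seq; auto).
  rewrite map_nth, seq_nth by auto. unfold afun. f_equal. lia.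
Qed.

Lemma oc_chart_ext (G : Group) (c : list G) (y y' : nat -> R) :
  (forall j, (1 <= j <= length c - 1)%nat -> y j = y' j) -> oc_chart c y = oc_chart c y'.
Proof.
  intro H. unfold oc_chart. apply functional_extensionality. intro z. cbv zeta. f_equal.
  apply map_ext_in. intros i Hi. apply in_seq in Hi.
  destruct (excluded_middle_informative _); auto.
  destruct (Nat.eqb (S (length c - 1) - i) 0) eqn:E1; destruct (Nat.eqb (S (length c - 1) - i) (S (length c - 1))) eqn:E2;
  destruct (Nat.eqb (length c - 1 - i) 0) eqn:E3; destruct (Nat.eqb (length c - 1 - i) (S (length c - 1))) eqn:E4;
  repeat match goal with H : Nat.eqb _ _ = true |- _ => apply Nat.eqb_eq in H
                 | H : Nat.eqb _ _ = false |- _ => apply Nat.eqb_neq in H end;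
  rewrite ?H by lia; auto; try lia.
  all: rewrite (H (length c - 1 - i)%nat) by lia; auto.
Qed.

Lemma rsum_ext (f f' : nat -> R) m : (forall j, (1 <= j <= m)%nat -> f j = f' j) -> rsum f m = rsum f' m.
Proof.
  induction m; intro H; simpl; auto. rewrite IHm, H; auto; intros; try apply H; lia.
Qed.

Lemma eucl_ext m (a a' b b' : nat -> R) : (forall j, (1 <= j <= m)%nat -> a j = a' j) ->
  (forall j, (1 <= j <= m)%nat -> b j = b' j) -> eucl m a b = eucl m a' b'.
Proof.
  intros Ha Hb. unfold eucl. f_equal. apply rsum_ext. intros j Hj. rewrite Ha, Hb; auto.
Qed.

Section Bridge.
Variable G : Group.
Variable X : G -> Prop.
Local Notation "x ** y" := (gmul G x y) (at level 40, left associativity).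
Local Notation "1g" := (gone G).
Local Notation inv := (ginv G).
Local Notation ell := (ell X).

Lemma gen_fold (w : nat -> R) (x pre : list G) r :
  fold_right (fun i acc => if Req_EM_T (w i) r then nth i (pre ++ x) 1g ** acc else acc) 1g (seq (length pre) (length x))
  = Ublk (combine (map w (seq (length pre) (length x))) x) r.
Proof.
  revert pre. induction x as [|a x IH]; intro pre; simpl; auto.
  rewrite app_nth2, Nat.sub_diag by lia. simpl.
  specialize (IH (pre ++ [a])). rewrite length_app, <- app_assoc in IH. simpl in IH.
  replace (length pre + 1)%nat with (S (length pre)) in IH by lia. rewrite IH. auto.
Qed.

Definition posl (x : list G) (s : nat -> R) : list (R * G) := combine (map (wpos x s) (seq 0 (length x))) x.

Lemma wf_chart_eq (x : list G) s : wf_chart x s = Ublk (posl x s).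
Proof.
  apply functional_extensionality. intro r. unfold wf_chart, posl.
  apply (gen_fold (wpos x s) x [] r).
Qed.

Lemma gen_flat (w : nat -> R) (x pre : list G) :
  flat_map (fun i => repeat (w i) (ell (nth i (pre ++ x) 1g))) (seq (length pre) (length x))
  = flat_map (fun p => repeat (fst p) (ell (snd p))) (combine (map w (seq (length pre) (length x))) x).
Proof.
  revert pre. induction x as [|a x IH]; intro pre; simpl; auto.
  rewrite app_nth2, Nat.sub_diag by lia. simpl.
  specialize (IH (pre ++ [a])). rewrite length_app, <- app_assoc in IH. simpl in IH.
  replace (length pre + 1)%nat with (S (length pre)) in IH by lia. rewrite IH. auto.
Qed.

Lemma wf_emb_eq (x : list G) s : wf_emb X x s = afun (flat_map (fun p => repeat (fst p) (ell (snd p))) (posl x s)).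
Proof.
  unfold wf_emb, afun, posl. pose proof (gen_flat (wpos x s) x []) as E. cbn [length app] in E.
  rewrite <- E. auto.
Qed.

Lemma length_posl x s : length (posl x s) = length x.
Proof. unfold posl. rewrite length_combine, length_map, length_seq. lia. Qed.

Lemma posl_snd x s : map snd (posl x s) = x.
Proof.
  unfold posl. rewrite map_snd_combine; auto. rewrite length_map, length_seq; auto.
Qed.

Lemma posl_fst x s : (2 <= length x)%nat ->
  map fst (posl x s) = 0 :: map s (seq 1 (length x - 2)) ++ [1].
Proof.
  intro H. unfold posl. rewrite map_fst_combine by (rewrite length_map, length_seq; auto).
  replace (length x) with (S (length x - 2) + 1)%nat at 1 by lia.
  rewrite seq_app. simpl. f_equal. unfold wpos. simpl. auto.
  rewrite map_app. f_equal.
  - apply map_ext_in. intros i Hi. apply in_seq in Hi. unfold wpos.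
    destruct (Nat.eqb i 0) eqn:E1. apply Nat.eqb_eq in E1; lia.
    destruct (Nat.eqb i (length x - 1)) eqn:E2. apply Nat.eqb_eq in E2; lia. auto.
  - cbn [map]. replace (S (length x - 2))%nat with (length x - 1)%nat by lia.
    destruct (Nat.eqb (length x - 1) 0) eqn:E1. apply Nat.eqb_eq in E1; lia.
    rewrite Nat.eqb_refl. auto.
Qed.

Lemma posl_sorted x s : (2 <= length x)%nat -> orthoscheme (length x - 2) s ->
  StronglySorted Rle (map fst (posl x s)) /\ Forall in01 (map fst (posl x s)).
Proof.
  intros H Ho. rewrite posl_fst by auto.
  set (A := map s (seq 1 (length x - 2))).
  assert (HAj : forall j, (1 <= j <= length x - 2)%nat -> afun A j = s j).
  { intros j Hj. unfold afun, A. rewrite nth_indep with (d' := s 0%nat) by (rewrite length_map, length_seq; lia).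
    rewrite map_nth, seq_nth by lia. f_equal; lia. }
  assert (HA : orthoscheme (length A) (afun A)).
  { unfold A at 1. rewrite length_map, length_seq. destruct Ho as [O1 O2]. split.
    - intros j Hj. rewrite HAj by lia. apply O1; auto.
    - intros j Hj. rewrite !HAj by lia. apply O2; auto. }
  apply orth_afun in HA as [S1 F1].
  split.
  - constructor. apply SS_snoc; auto. eapply Forall_impl; [|exact F1]. intros a [_ ?]; auto.
    apply Forall_app. split. eapply Forall_impl; [|exact F1]. intros a [? _]; auto. repeat constructor; lra.
  - constructor. unfold in01; lra. apply Forall_app; split; auto. repeat constructor; lra.
Qed.

Definition facf (y : G) : list G :=
  epsilon (inhabits []) (fun l => Forall X l /\ length l = ell y /\ gprod l = y).

Lemma facf_spec y : InMon X y -> Forall X (facf y) /\ length (facf y) = ell y /\ gprod (facf y) = y.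
Proof. intro H. unfold facf. apply epsilon_spec. apply fac; auto. Qed.

Definition refineL (Lx : list (R * G)) : list (R * G) :=
  flat_map (fun p => map (fun t => (fst p, t)) (facf (snd p))) Lx.

Lemma refine_snd Lx : map snd (refineL Lx) = concat (map facf (map snd Lx)).
Proof.
  induction Lx as [|[a b] Lx IH]; simpl; auto. rewrite map_app, IH, map_map. simpl. rewrite map_id. auto.
Qed.

Lemma refine_fst Lx : Forall (InMon X) (map snd Lx) ->
  map fst (refineL Lx) = flat_map (fun p => repeat (fst p) (ell (snd p))) Lx.
Proof.
  induction Lx as [|[a b] Lx IH]; simpl; auto. intro H. inversion H; subst.
  rewrite map_app, IH, map_map by auto. simpl. f_equal.
  destruct (facf_spec H2) as [_ [Hl _]]. rewrite <- Hl.
  clear. induction (facf b); simpl; auto. rewrite IHl; auto.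
Qed.

Lemma refine_Ublk Lx : Forall (InMon X) (map snd Lx) -> Ublk (refineL Lx) = Ublk Lx.
Proof.
  intro H. apply functional_extensionality. intro r.
  induction Lx as [|[a b] Lx IH]; simpl; auto. inversion H; subst.
  rewrite Ublk_app, IH by auto.
  destruct (facf_spec H2) as [_ [_ Hp]].
  destruct (Req_EM_T a r).
  - rewrite Ublk_all. rewrite map_map. simpl. rewrite map_id, Hp; auto.
    apply Forall_forall. intros p Hp'. apply in_map_iff in Hp' as [t [<- _]]. auto.
  - rewrite Ublk_notin. apply gmul1l. rewrite map_map. simpl. intro Hin.
    apply in_map_iff in Hin as [t [E _]]. auto.
Qed.

Lemma SS_flat_repeat (Lx : list (R * G)) (f : G -> nat) : StronglySorted Rle (map fst Lx) ->
  StronglySorted Rle (flat_map (fun p => repeat (fst p) (f (snd p))) Lx).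
Proof.
  induction Lx as [|[a b] Lx IH]; simpl; intro H. constructor.
  apply StronglySorted_inv in H as [H1 H2]. specialize (IH H1).
  induction (f b); simpl; auto. constructor; auto.
  apply Forall_app. split.
  - apply Forall_forall. intros y Hy. apply repeat_spec in Hy. subst; lra.
  - apply Forall_forall. intros y Hy. apply in_flat_map in Hy as [[a' b'] [Hin Hy]].
    apply repeat_spec in Hy. simpl in Hy. subst. rewrite Forall_forall in H2. apply H2.
    apply in_map_iff. exists (a', b'); auto.
Qed.

Lemma Forall_flat_repeat (P : R -> Prop) (Lx : list (R * G)) (f : G -> nat) : Forall P (map fst Lx) ->
  Forall P (flat_map (fun p => repeat (fst p) (f (snd p))) Lx).
Proof.
  intro H. apply Forall_forall. intros y Hy. apply in_flat_map in Hy as [[a' b'] [Hin Hy]].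
  apply repeat_spec in Hy. simpl in Hy. subst. rewrite Forall_forall in H. apply H.
  apply in_map_iff. exists (a', b'); auto.
Qed.

Lemma sum_ell_concat (xs : list G) : Forall (InMon X) xs ->
  length (concat (map facf xs)) = fold_right Nat.add 0%nat (map ell xs).
Proof.
  induction xs; simpl; auto. intro H. inversion H; subst. rewrite length_app, IHxs by auto.
  destruct (facf_spec H2) as [_ [-> _]]. auto.
Qed.

Lemma gprod_concat_facf (xs : list G) : Forall (InMon X) xs -> gprod (concat (map facf xs)) = gprod xs.
Proof.
  induction xs; simpl; auto. intro H. inversion H; subst. rewrite gprod_app, IHxs by auto.
  destruct (facf_spec H2) as [_ [_ ->]]. auto.
Qed.

Lemma Forall_concat_facf (xs : list G) : Forall (InMon X) xs -> Forall X (concat (map facf xs)).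
Proof.
  induction xs; simpl; auto. intro H. inversion H; subst. apply Forall_app. split; auto.
  apply facf_spec; auto.
Qed.

Lemma refine_good g x s : lin_fact X g x -> orthoscheme (length x - 2) s ->
  good X g (refineL (posl x s)) /\ Ublk (refineL (posl x s)) = wf_chart x s /\
  afun (map fst (refineL (posl x s))) = wf_emb X x s /\
  map snd (refineL (posl x s)) = concat (map facf x).
Proof.
  intros [H2 [HM [_ [Hs Hp]]]] Ho.
  assert (HMl : Forall (InMon X) (map snd (posl x s))) by (rewrite posl_snd; auto).
  destruct (@posl_sorted x s H2 Ho) as [S1 F1].
  split; [|split; [|split]].
  - split; [|split].
    + split; [|split]; rewrite refine_snd, posl_snd.
      * apply Forall_concat_facf; auto.
      * rewrite gprod_concat_facf; auto.
      * rewrite sum_ell_concat; auto.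
    + rewrite refine_fst by auto. apply SS_flat_repeat; auto.
    + rewrite refine_fst by auto. apply Forall_flat_repeat; auto.
  - rewrite refine_Ublk, wf_chart_eq; auto.
  - rewrite wf_emb_eq, refine_fst; auto.
  - rewrite refine_snd, posl_snd; auto.
Qed.

End Bridge.
Arguments posl {G} x s.
Arguments facf {G} X y.
Arguments refineL {G} X Lx.

Open Scope R_scope.

Lemma combine_fst_snd {A B : Type} (L : list (A * B)) : combine (map fst L) (map snd L) = L.
Proof. induction L as [|[a b] L IH]; simpl; auto. rewrite IH; auto. Qed.

Lemma combine_map_self {A B : Type} (f : A -> B) (P : list A) : combine P (map f P) = map (fun r => (r, f r)) P.
Proof. induction P; simpl; auto. rewrite IHP; auto. Qed.

Definition ib (r : R) : bool := if Rlt_dec 0 r then if Rlt_dec r 1 then true else false else false.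
Definition zb (c r : R) : bool := if Req_EM_T r c then true else false.

Lemma filter_nil {A : Type} (P : A -> bool) l : Forall (fun a => P a = false) l -> filter P l = [].
Proof. induction l; simpl; auto. intro H; inversion H; subst. rewrite H2; auto. Qed.

Lemma decomp01 {B : Type} (CL : list (R * B)) : StronglySorted Rlt (map fst CL) -> Forall in01 (map fst CL) ->
  CL = filter (fun p => zb 0 (fst p)) CL ++ filter (fun p => ib (fst p)) CL ++ filter (fun p => zb 1 (fst p)) CL.
Proof.
  induction CL as [|[r b] CL IH]; simpl; intros H1 H2; auto.
  apply StronglySorted_inv in H1 as [S1 S2]. inversion H2 as [|? ? Hr Hin]; subst.
  specialize (IH S1 Hin). unfold in01 in Hr.
  assert (Gt : forall p, In p CL -> r < fst p).
  { intros p Hp. rewrite Forall_forall in S2. apply S2, in_map_iff. exists p; auto. }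
  assert (In01 : forall p, In p CL -> 0 <= fst p <= 1).
  { intros p Hp. rewrite Forall_forall in Hin. apply Hin, in_map_iff. exists p; auto. }
  assert (FN : filter (fun p => zb 0 (fst p)) CL = []).
  { apply filter_nil, Forall_forall; intros p Hp; specialize (Gt p Hp); unfold zb; destruct (Req_EM_T (fst p) 0); auto.
    specialize (In01 p Hp). lra. }
  destruct (Req_EM_T r 0) as [E0|E0].
  - subst r. assert (B1 : zb 0 0 = true) by (unfold zb; destruct (Req_EM_T 0 0); auto; lra).
    assert (B2 : ib 0 = false) by (unfold ib; destruct (Rlt_dec 0 0); auto; lra).
    assert (B3 : zb 1 0 = false) by (unfold zb; destruct (Req_EM_T 0 1); auto; lra).
    rewrite B1, B2, B3. rewrite FN. simpl. f_equal. etransitivity; [exact IH|]. rewrite FN. auto.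
  - destruct (Req_EM_T r 1) as [E1|E1].
    + subst r. destruct CL as [|p CL'].
      * simpl. unfold zb, ib. destruct (Req_EM_T 1 0); destruct (Rlt_dec 0 1); destruct (Rlt_dec 1 1); destruct (Req_EM_T 1 1); simpl; auto; lra.
      * exfalso. specialize (Gt p (or_introl eq_refl)). specialize (In01 p (or_introl eq_refl)). lra.
    + assert (B1 : zb 0 r = false) by (unfold zb; destruct (Req_EM_T r 0); auto; lra).
      assert (B2 : ib r = true) by (unfold ib; destruct (Rlt_dec 0 r); destruct (Rlt_dec r 1); auto; lra).
      assert (B3 : zb 1 r = false) by (unfold zb; destruct (Req_EM_T r 1); auto; lra).
      rewrite B1, B2, B3. rewrite FN. simpl. f_equal. etransitivity; [exact IH|]. rewrite FN. auto.
Qed.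

Lemma SS_filter {B : Type} (P : R * B -> bool) (CL : list (R * B)) :
  StronglySorted Rlt (map fst CL) -> StronglySorted Rlt (map fst (filter P CL)).
Proof.
  induction CL as [|p CL IH]; simpl; intro H; auto. apply StronglySorted_inv in H as [H1 H2].
  destruct (P p); simpl; auto. constructor; auto.
  apply Forall_forall. intros x Hx. apply in_map_iff in Hx as [q [<- Hq]]. apply filter_In in Hq as [Hq _].
  rewrite Forall_forall in H2. apply H2, in_map_iff. exists q; auto.
Qed.

Section WF.
Variable G : Group.
Variable X : G -> Prop.
Local Notation "x ** y" := (gmul G x y) (at level 40, left associativity).
Local Notation "1g" := (gone G).
Local Notation inv := (ginv G).
Local Notation ell := (ell X).
Variable g : G.

Lemma wfact_cell (u : R -> G) : is_wfact X g u ->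
  exists x s, lin_fact X g x /\ orthoscheme (length x - 2) s /\ u = wf_chart x s.
Proof.
  intros [Hout [sl [SSl [Fl [Hiff Hlf]]]]].
  set (P := 0 :: sl ++ [1]).
  assert (Ex : u 0 :: map u sl ++ [u 1] = map u P) by (unfold P; simpl; rewrite map_app; auto).
  exists (map u P), (afun sl). rewrite <- Ex. split; auto.
  assert (Hlx : Nat.sub (length (u 0 :: map u sl ++ [u 1])) 2 = length sl) by (simpl; rewrite length_app, length_map; simpl; lia).
  rewrite Hlx. split.
  { apply orth_afun. split. apply SS_weaken; auto. eapply Forall_impl; [|exact Fl]. intros a Ha; unfold in01; lra. }
  rewrite wf_chart_eq. rewrite <- (combine_fst_snd (posl _ _)), posl_fst, posl_snd by (simpl; rewrite length_app; simpl; lia).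
  rewrite Hlx, map_afun_seq. fold P. rewrite Ex, combine_map_self.
  assert (SP : StronglySorted Rlt P).
  { unfold P. constructor. apply SS_snoc; auto. eapply Forall_impl; [|exact Fl]. intros a Ha; lra.
    apply Forall_app. split. eapply Forall_impl; [|exact Fl]. intros a Ha; lra. repeat constructor; lra. }
  assert (ND : NoDup (map fst (map (fun r => (r, u r)) P))) by (rewrite map_map; simpl; rewrite map_id; apply pos_NoDup; auto).
  apply functional_extensionality. intro r.
  destruct (in_dec Req_EM_T r P) as [Hin|Hnin].
  - symmetry. apply Ublk_lookup; auto. apply in_map_iff. exists r; auto.
  - rewrite Ublk_notin. 2: { rewrite map_map; simpl; rewrite map_id; auto. }
    destruct (classic (0 <= r <= 1)) as [H01|H01]; [|apply Hout; auto].
    destruct (Req_EM_T r 0) as [->|N0]. { exfalso; apply Hnin; unfold P; simpl; auto. }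
    destruct (Req_EM_T r 1) as [->|N1]. { exfalso; apply Hnin; unfold P; simpl; right; apply in_or_app; simpl; auto. }
    destruct (classic (u r = 1g)) as [E|E]; auto. exfalso. apply Hnin. unfold P. simpl. right. apply in_or_app. left.
    apply Hiff; auto. lra.
Qed.

Lemma Ublk_as_filter (L : list (R * G)) r : Ublk L r = gprod (map snd (filter (fun p => zb r (fst p)) L)).
Proof.
  induction L as [|[a b] L IH]; simpl; auto. unfold zb in *. destruct (Req_EM_T a r); simpl; rewrite IH; auto.
Qed.

Lemma filter_mapg (P : R -> bool) (CL : list (R * list G)) :
  filter (fun p => P (fst p)) (mapg CL) = mapg (filter (fun p => P (fst p)) CL).
Proof. induction CL; simpl; auto. destruct (P (fst a)); simpl; rewrite IHCL; auto. Qed.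

Lemma sum_ell_blocks (BL : list (list G)) : geo X (concat BL) ->
  fold_right Nat.add 0%nat (map ell (map gprod BL)) = length (concat BL).
Proof.
  induction BL as [|bl BL IH]; simpl; intro H. auto. apply geo_app in H as [H1 H2].
  rewrite IH, length_app; auto. destruct H1 as [_ ->]; auto.
Qed.

Lemma wfact_Ublk (L : list (R * G)) : good X g L -> is_wfact X g (Ublk L).
Proof.
  intros HL. destruct HL as [Ha [SL FL]]. pose proof (atomic_geo Ha) as Hgeo.
  set (CL := compL L).
  assert (SCL : StronglySorted Rlt (map fst CL)) by (apply compL_sorted; auto).
  assert (NDCL : NoDup (map fst CL)) by (apply pos_NoDup; auto).
  assert (FCL : Forall in01 (map fst CL)).
  { rewrite Forall_forall. intros x Hx. apply (@compL_pos_incl G X L x) in Hx. rewrite Forall_forall in FL. exact (FL x Hx). }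
  assert (EU : Ublk L = Ublk (mapg CL)) by (apply functional_extensionality; intro r; apply compL_Ublk).
  assert (Hcc : concat (map snd CL) = map snd L) by apply compL_concat.
  assert (Hgb : Forall (geo X) (map snd CL)) by (apply geo_concat; rewrite Hcc; auto).
  assert (Hne : Forall (fun p => snd p <> []) CL) by apply compL_nonempty.
  assert (Dec := @decomp01 _ CL SCL FCL).
  set (C0 := filter (fun p => zb 0 (fst p)) CL) in Dec.
  set (CI := filter (fun p => ib (fst p)) CL) in Dec.
  set (C1 := filter (fun p => zb 1 (fst p)) CL) in Dec.
  assert (Lookup : forall p, In p CL -> Ublk L (fst p) = gprod (snd p)).
  { intros [r bl] Hp. rewrite EU. apply Ublk_lookup. rewrite mapg_fst; auto. unfold mapg. apply in_map_iff. exists (r, bl); auto. }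
  assert (Blk : forall p, In p CL -> ell (gprod (snd p)) = length (snd p)).
  { intros p Hp. rewrite Forall_forall in Hgb. apply Hgb, in_map_iff. exists p; auto. }
  assert (Iff : forall r, 0 < r < 1 -> (Ublk L r <> 1g <-> In r (map fst CI))).
  { intros r Hr. split.
    - intro H. destruct (in_dec Req_EM_T r (map fst CL)) as [I|I].
      + apply in_map_iff in I as [p [Ep Hp]]. apply in_map_iff. exists p. split; auto.
        apply filter_In. split; auto. subst r. unfold ib. destruct (Rlt_dec 0 (fst p)); [|lra]. destruct (Rlt_dec (fst p) 1); [auto|lra].
      + exfalso. apply H. rewrite EU. apply Ublk_notin. rewrite mapg_fst; auto.
    - intros I. apply in_map_iff in I as [p [Ep Hp]]. apply filter_In in Hp as [Hp _]. subst r.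
      rewrite Lookup by auto. intro E. pose proof (Blk p Hp) as B. rewrite E, ell_one in B.
      rewrite Forall_forall in Hne. apply (Hne p Hp). destruct (snd p); simpl in B; auto; lia. }
  split.
  { intros r Hr. apply Ublk_notin. intro Hin. rewrite Forall_forall in FL. apply Hr, FL; auto. }
  exists (map fst CI). split; [|split; [|split]].
  - apply SS_filter; auto.
  - apply Forall_forall. intros r Hr. apply in_map_iff in Hr as [p [<- Hp]]. apply filter_In in Hp as [_ Hp].
    unfold ib in Hp. destruct (Rlt_dec 0 (fst p)); [|discriminate]. destruct (Rlt_dec (fst p) 1); [lra|discriminate].
  - exact Iff.
  -
    assert (U0 : Ublk L 0 = gprod (concat (map snd C0))).
    { rewrite EU, Ublk_as_filter, filter_mapg. unfold mapg. rewrite map_map, gprod_concat, map_map. auto. }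
    assert (U1 : Ublk L 1 = gprod (concat (map snd C1))).
    { rewrite EU, Ublk_as_filter, filter_mapg. unfold mapg. rewrite map_map, gprod_concat, map_map. auto. }
    assert (UI : map (Ublk L) (map fst CI) = map gprod (map snd CI)).
    { rewrite !map_map. apply map_ext_in. intros p Hp. apply Lookup. apply filter_In in Hp; tauto. }
    assert (Ee : concat (map snd C0) ++ concat (map snd CI) ++ concat (map snd C1) = map snd L).
    { rewrite <- Hcc. rewrite Dec at 1. rewrite !map_app, !concat_app. auto. }
    assert (GE : geo X (map snd L)) by auto. rewrite <- Ee in GE.
    apply geo_app in GE as [G0 GE]. apply geo_app in GE as [GI G1].
    split; [|split; [|split; [|split]]].
    + simpl. rewrite length_app. simpl. lia.
    + constructor. apply InMon_Ublk, Ha. apply Forall_app. split.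
      * apply Forall_map. apply Forall_forall. intros; apply InMon_Ublk, Ha.
      * constructor; [apply InMon_Ublk, Ha|constructor].
    + intros i Hi. simpl in Hi. rewrite length_app, length_map in Hi. simpl in Hi.
      destruct i as [|i]. lia. simpl. rewrite app_nth1 by (rewrite length_map; lia).
      rewrite nth_indep with (d' := Ublk L 0) by (rewrite length_map; lia). rewrite map_nth.
      apply Iff.
      * assert (Hin : In (nth i (map fst CI) 0) (map fst CI)) by (apply nth_In; lia).
        apply in_map_iff in Hin as [p [Ep Hp]]. apply filter_In in Hp as [_ Hp]. rewrite <- Ep.
        unfold ib in Hp. destruct (Rlt_dec 0 (fst p)); [|discriminate]. destruct (Rlt_dec (fst p) 1); [lra|discriminate].
      * apply nth_In. lia.
    + rewrite U0, U1, UI. simpl. rewrite map_app, fold_right_app. simpl.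
      destruct Ha as [_ [_ HLn]]. rewrite <- HLn, <- Ee, !length_app.
      rewrite (proj2 G0), (proj2 G1).
      replace (fold_right Nat.add (length (concat (map snd C1)) + 0)%nat (map ell (map gprod (map snd CI))))
        with (length (concat (map snd C1)) + fold_right Nat.add 0%nat (map ell (map gprod (map snd CI))))%nat.
      rewrite sum_ell_blocks by auto. lia.
      clear. induction (map ell (map gprod (map snd CI))); simpl; lia.
    + rewrite U0, U1, UI. destruct Ha as [_ [Hp _]]. rewrite <- Hp, <- Ee, !gprod_app.
      simpl. rewrite gprod_app. simpl. rewrite !gprod_concat. rewrite gmul1r, !gmulA. auto.
Qed.

Lemma geo_atoms (e : list G) : geo X e -> Forall (fun t => ell t = 1%nat) e.
Proof.
  intro H. apply Forall_forall. intros t Ht. apply in_split in Ht as [l1 [l2 ->]].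
  apply geo_app in H as [_ H]. change (t :: l2) with ([t] ++ l2) in H. apply geo_app in H as [[_ H] _].
  simpl in H. rewrite gmul1r in H. auto.
Qed.

Lemma atomic_cell (L : list (R * G)) : good X g L ->
  lin_fact X g (1g :: map snd L ++ [1g]) /\
  orthoscheme (length (1g :: map snd L ++ [1g]) - 2) (afun (map fst L)) /\
  wf_chart (1g :: map snd L ++ [1g]) (afun (map fst L)) = Ublk L /\
  wf_emb X (1g :: map snd L ++ [1g]) (afun (map fst L)) = afun (map fst L).
Proof.
  intros HL. pose proof HL as [Ha [SL FL]]. pose proof (atomic_geo Ha) as Hgeo.
  pose proof (geo_atoms Hgeo) as Hat.
  set (x := 1g :: map snd L ++ [1g]).
  assert (Hlx : (length x - 2)%nat = length L) by (unfold x; simpl; rewrite length_app, length_map; simpl; lia).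
  assert (Hpos : posl x (afun (map fst L)) = (0, 1g) :: L ++ [(1, 1g)]).
  { rewrite <- (combine_fst_snd (posl _ _)), posl_fst, posl_snd by (unfold x; simpl; rewrite length_app; simpl; lia).
    rewrite Hlx. rewrite <- (length_map fst L), map_afun_seq. unfold x. simpl. f_equal.
    rewrite <- (combine_fst_snd L) at 3. clear. induction L; simpl; auto. rewrite IHL; auto. }
  split; [|split; [|split]].
  - destruct Ha as [HX [Hp Hn]]. split; [|split; [|split; [|split]]].
    + unfold x; simpl; rewrite length_app; simpl; lia.
    + constructor. apply InMon_one. apply Forall_app. split. eapply Forall_impl; [|exact HX].
      intros a Ha'. exists [a]. simpl. rewrite gmul1r; auto. repeat constructor. apply InMon_one.
    + intros i Hi. fold x. unfold x in Hi. simpl in Hi. rewrite length_app, length_map in Hi. simpl in Hi.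
      destruct i as [|i]; [lia|]. unfold x. simpl. rewrite app_nth1 by (rewrite length_map; lia).
      intro E. assert (Hin : In (nth i (map snd L) 1g) (map snd L)) by (apply nth_In; rewrite length_map; lia).
      rewrite Forall_forall in Hat. specialize (Hat _ Hin). rewrite E, ell_one in Hat. lia.
    + unfold x. simpl. rewrite ell_one, map_app, fold_right_app. simpl. rewrite ell_one.
      rewrite <- Hn. clear - Hat. induction (map snd L); simpl; auto. inversion Hat; subst. rewrite H1. simpl. f_equal; auto.
    + unfold x. simpl. rewrite gprod_app. simpl. rewrite !gmul1r, gmul1l. auto.
  - rewrite Hlx, <- (length_map fst L). apply (proj2 (orth_afun _)). split; auto.
  - rewrite wf_chart_eq, Hpos. apply functional_extensionality. intro r. simpl. rewrite Ublk_app. simpl.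
    destruct (Req_EM_T 0 r); destruct (Req_EM_T 1 r); rewrite ?gmul1l, ?gmul1r; auto.
  - rewrite wf_emb_eq, Hpos. simpl. rewrite ell_one. simpl. rewrite flat_map_app. simpl. rewrite ell_one. simpl.
    rewrite app_nil_r. f_equal. clear - Hat. induction L as [|[a b] L IH]; simpl; auto. inversion Hat; subst.
    simpl in H1. rewrite H1. simpl. rewrite IH; auto.
Qed.

End WF.

Open Scope R_scope.

Lemma afun_seq (y : nat -> R) n j : (1 <= j <= n)%nat -> afun (map y (seq 1 n)) j = y j.
Proof.
  intro H. unfold afun. rewrite nth_indep with (d' := y 0%nat) by (rewrite length_map, length_seq; lia).
  rewrite map_nth, seq_nth by lia. f_equal; lia.
Qed.

Lemma orth_ext n (y y' : nat -> R) : orthoscheme n y -> (forall j, (1 <= j <= n)%nat -> y' j = y j) -> orthoscheme n y'.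
Proof.
  intros [O1 O2] H. split; intros j Hj; rewrite ?H by lia. apply O1; auto. apply O2; auto.
Qed.

Section Final.
Variable G : Group.
Variable X : G -> Prop.
Variable g : G.
Hypothesis Hcc : conj_closed X.
Hypothesis Hg : InMon X g.
Local Notation "1g" := (gone G).

Definition Rel (p : G -> R) (u : R -> G) := exists L, good X g L /\ p = OptL L /\ u = Ublk L.

Lemma chain_good (e : list G) (y : nat -> R) : atomic X g e -> orthoscheme (length e) y ->
  good X g (combine (map y (seq 1 (length e))) e) /\
  OptL (combine (map y (seq 1 (length e))) e) = oc_chart (chainE e) y /\
  (forall j, (1 <= j <= length e)%nat -> afun (map fst (combine (map y (seq 1 (length e))) e)) j = y j).
Proof.
  intros Ha Ho. set (A := map y (seq 1 (length e))).
  assert (HlA : length A = length e) by (unfold A; rewrite length_map, length_seq; auto).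
  assert (E1 : map fst (combine A e) = A) by (apply map_fst_combine; auto).
  assert (E2 : map snd (combine A e) = e) by (apply map_snd_combine; auto).
  assert (Hag : forall j, (1 <= j <= length e)%nat -> afun A j = y j) by (intros; apply afun_seq; auto).
  rewrite E1. split; [|split]; auto.
  - split. rewrite E2; auto. rewrite E1. apply orth_afun. rewrite HlA. eapply orth_ext; eauto.
  - unfold OptL. rewrite E1, E2. apply oc_chart_ext. rewrite length_chainE. intros j Hj. apply Hag. lia.
Qed.

Lemma Rl1 (p : G -> R) : pts (Og_complex X g) p -> exists u, Rel p u.
Proof.
  simpl. intros [c [y [Hc [Ho <-]]]].
  destruct (max_chain_chainE Hcc Hg Hc) as [e [Ha ->]].
  rewrite length_chainE in Ho. replace (S (length e) - 1)%nat with (length e) in Ho by lia.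
  destruct (chain_good Ha Ho) as [HG [HO _]].
  exists (Ublk (combine (map y (seq 1 (length e))) e)). exists (combine (map y (seq 1 (length e))) e). auto.
Qed.

Lemma Rl2 (u : R -> G) : is_wfact X g u -> exists p, Rel p u.
Proof.
  intro H. destruct (wfact_cell H) as [x [s [Hx [Hs ->]]]].
  destruct (refine_good Hx Hs) as [HG [HU _]].
  exists (OptL (refineL X (posl x s))), (refineL X (posl x s)). auto.
Qed.

Lemma Rl3 p u u' : Rel p u -> Rel p u' -> u = u'.
Proof.
  intros [L [HL [-> ->]]] [M [HM [E ->]]]. apply Canon_to_W with X g; auto. apply O_to_Canon with X g; auto.
Qed.

Lemma Rl4 p p' u : Rel p u -> Rel p' u -> p = p'.
Proof.
  intros [L [HL [-> ->]]] [M [HM [-> E]]]. apply Canon_to_O with X g; auto. apply W_to_Canon with X g; auto.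
Qed.

Lemma Rl5a p u : Rel p u -> pts (Og_complex X g) p.
Proof.
  intros [L [HL [-> ->]]]. simpl. exists (chainE (map snd L)), (afun (map fst L)). split; [|split].
  - apply chainE_max; auto. apply HL.
  - rewrite length_chainE. replace (S (length (map snd L)) - 1)%nat with (length (map fst L)) by (rewrite !length_map; lia).
    apply orth_afun. split; apply HL.
  - auto.
Qed.

Lemma Rl5b p u : Rel p u -> is_wfact X g u.
Proof. intros [L [HL [_ ->]]]. apply wfact_Ublk; auto. Qed.

Lemma Rl6 p q u v d : cell_step (Og_complex X g) p q d -> Rel p u -> Rel q v -> cell_step (WFact_complex X g) u v d.
Proof.
  intros [c [a [b [Hc [Ha [Hb [Ea [Eb Ed]]]]]]]] Rp Rq.
  cbn [amb emb dom chart is_cell Og_complex WFact_complex] in *.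
  destruct (max_chain_chainE Hcc Hg Hc) as [e [He ->]].
  rewrite length_chainE in Ha, Hb, Ed. replace (S (length e) - 1)%nat with (length e) in Ha, Hb, Ed by lia.
  destruct (chain_good He Ha) as [Ga [Oa Aa]]. destruct (chain_good He Hb) as [Gb [Ob Ab]].
  set (La := combine (map a (seq 1 (length e))) e) in *. set (Lb := combine (map b (seq 1 (length e))) e) in *.
  assert (Eu : u = Ublk La). { apply (Rl3 Rp). exists La. split; auto. split; auto. rewrite Oa; auto. }
  assert (Ev : v = Ublk Lb). { apply (Rl3 Rq). exists Lb. split; auto. split; auto. rewrite Ob; auto. }
  assert (Sa : map snd La = e) by (apply map_snd_combine; rewrite length_map, length_seq; auto).
  assert (Sb : map snd Lb = e) by (apply map_snd_combine; rewrite length_map, length_seq; auto).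
  destruct (atomic_cell Ga) as [C1 [C2 [C3 C4]]]. destruct (atomic_cell Gb) as [D1 [D2 [D3 D4]]].
  rewrite Sa in C1, C2, C3, C4. rewrite Sb in D1, D2, D3, D4.
  exists (1g :: e ++ [1g]), (afun (map fst La)), (afun (map fst Lb)).
  cbn [amb emb dom chart is_cell Og_complex WFact_complex].
  split; [|split; [|split; [|split; [|split]]]]; auto.
  - rewrite C3; auto.
  - rewrite D3; auto.
  - rewrite C4, D4, Ed. destruct He as [_ [_ Hl]]. rewrite <- Hl. apply eucl_ext; intros; symmetry; auto.
Qed.

Lemma Rl7 p q u v d : cell_step (WFact_complex X g) u v d -> Rel p u -> Rel q v -> cell_step (Og_complex X g) p q d.
Proof.
  intros [x [s [t [Hx [Hs [Ht [Es [Et Ed]]]]]]]] Rp Rq.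
  cbn [amb emb dom chart is_cell Og_complex WFact_complex] in *.
  destruct (refine_good Hx Hs) as [Gs [Us [As Ss]]]. destruct (refine_good Hx Ht) as [Gt [Ut [At St]]].
  set (Ls := refineL X (posl x s)) in *. set (Lt := refineL X (posl x t)) in *.
  assert (Ep : p = OptL Ls). { apply (Rl4 Rp). exists Ls. split; auto. split; auto. rewrite Us; auto. }
  assert (Eq : q = OptL Lt). { apply (Rl4 Rq). exists Lt. split; auto. split; auto. rewrite Ut; auto. }
  set (e := concat (map (facf X) x)) in *.
  assert (He : atomic X g e) by (rewrite <- Ss; apply Gs).
  exists (chainE e), (afun (map fst Ls)), (afun (map fst Lt)).
  cbn [amb emb dom chart is_cell Og_complex WFact_complex].
  assert (Hle : (length (chainE e) - 1)%nat = length e) by (rewrite length_chainE; lia).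
  rewrite Hle. split; [|split; [|split; [|split; [|split]]]].
  - apply chainE_max; auto.
  - replace (length e) with (length (map fst Ls)) by (rewrite length_map, <- Ss, length_map; auto).
    apply orth_afun. split; apply Gs.
  - replace (length e) with (length (map fst Lt)) by (rewrite length_map, <- St, length_map; auto).
    apply orth_afun. split; apply Gt.
  - rewrite Ep. unfold OptL. rewrite Ss. auto.
  - rewrite Eq. unfold OptL. rewrite St. auto.
  - rewrite Ed, <- As, <- At. destruct He as [_ [_ Hl]]. rewrite Hl. auto.
Qed.

End Final.

Lemma sl_pts {P} {K : pecomplex P} {p q d} : string_len K p q d -> pts K p.
Proof. intro H; destruct H; auto. Qed.

Unset Implicit Arguments.
Theorem proposition4p6 (G : Group) (X : G -> Prop) (g : G) :
  generates X -> conj_closed X -> InMon X g ->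
  isometric (Og_complex X g) (WFact_complex X g).
Proof.
  intros _ Hcc Hg.
  set (f := fun p => epsilon (inhabits (fun _ : R => gone G)) (Rel G X g p)).
  assert (Hf : forall p, pts (Og_complex X g) p -> Rel G X g p (f p)).
  { intros p Hp. unfold f. apply epsilon_spec. apply (Rl1 Hcc Hg Hp). }
  assert (Surj : forall u, pts (WFact_complex X g) u -> exists p, pts (Og_complex X g) p /\ f p = u).
  { intros u Hu. destruct (Rl2 Hu) as [p Hp]. exists p.
    assert (Hpp : pts (Og_complex X g) p) by exact (Rl5a Hcc Hp).
    split; auto. exact (Rl3 (Hf p Hpp) Hp). }
  assert (Inj : forall p p', pts (Og_complex X g) p -> pts (Og_complex X g) p' -> f p = f p' -> p = p').
  { intros p p' Hp Hp' E. pose proof (Hf p' Hp') as H'. rewrite <- E in H'. exact (Rl4 (Hf p Hp) H'). }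
  assert (Fwd : forall p q d, string_len (Og_complex X g) p q d -> string_len (WFact_complex X g) (f p) (f q) d).
  { intros p q d H. induction H as [p Hp|p q r d e Hp Hcs Hsl IH].
    - apply sl_nil. exact (Rl5b (Hf p Hp)).
    - apply sl_cons with (f q); auto. exact (Rl5b (Hf p Hp)).
      apply (Rl6 Hcc Hg Hcs (Hf p Hp) (Hf q (sl_pts Hsl))). }
  assert (Bwd : forall u v d, string_len (WFact_complex X g) u v d -> forall p q,
     pts (Og_complex X g) p -> pts (Og_complex X g) q -> u = f p -> v = f q -> string_len (Og_complex X g) p q d).
  { intros u v d H. induction H as [u Hu|u w v d e Hu Hcs Hsl IH]; intros p q Hp Hq Ep Eq.
    - assert (p = q) by (apply Inj; auto; congruence). subst q. apply sl_nil; auto.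
    - destruct (Surj w (sl_pts Hsl)) as [p'' [Hp'' Ew]].
      subst u. apply (@sl_cons _ _ p p'' q d e Hp).
      + rewrite <- Ew in Hcs. apply (Rl7 Hcc Hcs (Hf p Hp) (Hf p'' Hp'')).
      + apply IH; auto. }
  exists f. split; [|split; [|split]].
  - intros p Hp. exact (Rl5b (Hf p Hp)).
  - exact Inj.
  - exact Surj.
  - intros p p' Hp Hp'. unfold pe_dist. f_equal. apply functional_extensionality. intro d.
    apply propositional_extensionality. split.
    + intro H. apply (Bwd _ _ _ H); auto.
    + apply Fwd.
Qed.
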